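(* Let $A^!=T(A_1^* )/(R^\perp)$ be the quadratic dual of $A=A_k$, where $R=\operatorname{span}(r_1,\dots,r_7)\subset A_1\otimes A_1$. Identify $A^!_1=A_1^*$ with $\operatorname{Im}\mathbb{O}_k$ by letting the basis of $A_1^*$ dual to $x_1,\dots,x_7$ correspond to $o_1,\dots,o_7$. Then there are identifications $A^!_2=\operatorname{Im}\mathbb{O}_k$ and $A^!_3=k$ such that (1) the multiplication $A^!_1\times A^!_1\to A^!_2$ is $(u,v)\mapsto \operatorname{Im}(uv)$; (2) the multiplication $A^!_1\times A^!_1\times A^!_1\to A^!_3$ is $(u,v,w)\mapsto -\operatorname{Re}(uvw)$; and (3) $(A^!)^*\cong A^!$ as $A^!$-bimodules, i.e. $A^!$ is a symmetric Frobenius algebra.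
   Context: Let $k$ be a field of characteristic $\ne 2$. Label the points of the Fano plane by $1,\dots,7$ so that its directed lines are $123,145,167,246,275,374,365$. For $i,j,l$ put $\varepsilon^{ijl}=1$ if $(i,j,l)$ is a cyclic rotation of a directed line, $-1$ if $(j,i,l)$ is, and $0$ otherwise. $A_k=k\langle x_1,\dots,x_7\rangle/(r_1,\dots,r_7)$ with $\deg x_i=1$ and $r_i=\sum_{m,n}\varepsilon^{imn}x_mx_n$. The octonion algebra $\mathbb{O}_k$ is the unital non-associative $k$-algebra with basis $1,o_1,\dots,o_7$ and $o_ro_s=\sum_{i}\varepsilon^{rsi}o_i-\delta_{rs}$; $\operatorname{Im}\mathbb{O}_k=\operatorname{span}(o_1,\dots,o_7)$; conjugation $u\mapsto\bar u$ is the linear map fixing $1$ and negating each $o_i$; $\operatorname{Re}(u)=\tfrac12(u+\bar u)\in k$, $\operatorname{Im}(u)=\tfrac12(u-\bar u)$. In $\mathbb{O}_k$, products of three imaginary octonions are associative in the sense that $\operatorname{Re}((uv)w)=\operatorname{Re}(u(vw))$, so $\operatorname{Re}(uvw)$ is unambiguous. A graded algebra is symmetric Frobenius if it is finite-dimensional and isomorphic to its linear dual as a bimodule. *)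

(* Defs.v *)
From HB Require Import structures.
From mathcomp Require Import all_boot all_order all_algebra.
Set Implicit Arguments. Unset Strict Implicit. Unset Printing Implicit Defensive.
Import GRing.Theory.
Local Open Scope ring_scope.

(* Points 1..7 of the Fano plane are the ordinals 0..6
   (point p is the ordinal p-1). *)

Definition fano_lines : seq (nat * nat * nat) :=
  [:: (1,2,3); (1,4,5); (1,6,7); (2,4,6); (2,7,5); (3,7,4); (3,6,5)]%N.

Definition is_cyc_line (i j l : nat) : bool :=
  has (fun t : nat * nat * nat => let: (a, b, c) := t in
         [|| (i, j, l) == (a, b, c), (i, j, l) == (b, c, a) | (i, j, l) == (c, a, b)])
      fano_lines.

Definition eps (k : fieldType) (i j l : 'I_7) : k :=
  if is_cyc_line i.+1 j.+1 l.+1 then 1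
  else if is_cyc_line j.+1 i.+1 l.+1 then -1 else 0.

Record oct (k : fieldType) := Oct { oRe : k; oIm : 'I_7 -> k }.

(* o_r o_s = sum_i eps^{rsi} o_i - delta_{rs}, extended bilinearly, 1 unital *)
Definition omul (k : fieldType) (x y : oct k) : oct k :=
  Oct (oRe x * oRe y - \sum_(r < 7) oIm x r * oIm y r)
      (fun i => oRe x * oIm y i + oRe y * oIm x i
                + \sum_(r < 7) \sum_(s < 7) eps k r s i * oIm x r * oIm y s).

Definition imO (k : fieldType) (u : 'I_7 -> k) : oct k := Oct 0 u.

(* ---------- Tensor algebra T(A_1^* ) (in its completed form prod_n (A_1^* )^{(x)n}):
   an element is a function on words in the dual basis xi_1..xi_7 of x_1..x_7
   (the coefficient of xi_{w_1} (x) ... (x) xi_{w_n}). *)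
Definition word := seq 'I_7.
Definition tens (k : fieldType) := word -> k.

Definition tadd (k : fieldType) (x y : tens k) : tens k := fun w => x w + y w.
Definition tscale (k : fieldType) (c : k) (x : tens k) : tens k := fun w => c * x w.
Definition tmul (k : fieldType) (x y : tens k) : tens k :=
  fun w => \sum_(i < (size w).+1) x (take i w) * y (drop i w).
Definition tword (k : fieldType) (u : word) : tens k := fun w => (w == u)%:R.
Definition homog (k : fieldType) (n : nat) (x : tens k) : Prop :=
  forall w, size w != n -> x w = 0.
Definition hcomp (k : fieldType) (n : nat) (x : tens k) : tens k :=
  fun w => if size w == n then x w else 0.

(* The relations r_i = sum_{m,n} eps^{imn} x_m x_n in A_1 (x) A_1,
   given by their coefficients on x_m (x) x_n. *)
Definition rel_r (k : fieldType) (i : 'I_7) (m n : 'I_7) : k := eps k i m n.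

(* canonical pairing (A_1^* (x) A_1^* ) x (A_1 (x) A_1) -> k,
   <xi_a (x) xi_b, x_m (x) x_n> = delta_am delta_bn *)
Definition pair2 (k : fieldType) (rho : tens k) (r : 'I_7 -> 'I_7 -> k) : k :=
  \sum_(m < 7) \sum_(n < 7) rho [:: m; n] * r m n.

Definition Rperp (k : fieldType) (rho : tens k) : Prop :=
  homog 2 rho /\ forall c : 'I_7 -> k,
    pair2 rho (fun m n => \sum_(i < 7) c i * rel_r k i m n) = 0.

Definition Igen (k : fieldType) (g : tens k) : Prop :=
  exists (u v : word) (rho : tens k),
    Rperp rho /\ g = tmul (tmul (tword k u) rho) (tword k v).

Definition in_span_Igen (k : fieldType) (x : tens k) : Prop :=
  exists (m : nat) (c : 'I_m -> k) (g : 'I_m -> tens k),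
    (forall i, Igen (g i)) /\ forall w, x w = \sum_(i < m) c i * g i w.

(* membership in the (graded) ideal (R^perp): every homogeneous component is
   a finite linear combination of generators *)
Definition inI (k : fieldType) (x : tens k) : Prop :=
  forall n, in_span_Igen (hcomp n x).

(* A^!_1 = A_1^* identified with Im O: xi_i <-> o_i *)
Definition iota1 (k : fieldType) (u : tens k) : 'I_7 -> k := fun i => u [:: i].

(* A linear map psi : T_n -> k^7 induces an identification (linear isomorphism)
   A^!_n = T_n/I_n ~= Im O_k : it is linear, its kernel on T_n is exactly I_n,
   and it is onto. *)
Definition ident_ImO (k : fieldType) (n : nat) (psi : tens k -> 'I_7 -> k) : Prop :=
  (forall c x y i, psi (tadd (tscale c x) y) i = c * psi x i + psi y i) /\
  (forall x, homog n x -> ((forall i, psi x i = 0) <-> inI x)) /\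
  (forall v : 'I_7 -> k, exists x, homog n x /\ forall i, psi x i = v i).

Definition ident_k (k : fieldType) (n : nat) (psi : tens k -> k) : Prop :=
  (forall c x y, psi (tadd (tscale c x) y) = c * psi x + psi y) /\
  (forall x, homog n x -> (psi x = 0 <-> inI x)) /\
  (forall v : k, exists x, homog n x /\ psi x = v).

(* finite-dimensional: A^!_n = 0 for n large *)
Definition fin_dim_Ashriek (k : fieldType) : Prop :=
  exists N : nat, forall x : tens k, (forall w, (size w < N)%N -> x w = 0) -> inI x.

Definition tfunctional (k : fieldType) (f : tens k -> k) : Prop :=
  forall c x y, f (tadd (tscale c x) y) = c * f x + f y.

(* Phi x y = phi([x])([y]) for a map phi : A^! -> (A^!)^*, A^! = T/I;
   phi is a linear bimodule isomorphism, where (a.f.b)(y) = f(b y a). *)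
Definition bimod_iso_dual (k : fieldType) (Phi : tens k -> tens k -> k) : Prop :=
  (forall x, tfunctional (Phi x)) /\
  (forall y, tfunctional (fun x => Phi x y)) /\
  (forall x y, inI y -> Phi x y = 0) /\
  (forall x y, inI x -> Phi x y = 0) /\
  (forall a x b y, Phi (tmul (tmul a x) b) y = Phi x (tmul (tmul b y) a)) /\
  (forall x, (forall y, Phi x y = 0) -> inI x) /\
  (forall f : tens k -> k, tfunctional f -> (forall y, inI y -> f y = 0) ->
     exists x, forall y, f y = Phi x y).

Definition sym_frobenius_Ashriek (k : fieldType) : Prop :=
  fin_dim_Ashriek k /\ exists Phi : tens k -> tens k -> k, bimod_iso_dual Phi.

(* Main.v *)
Require Import Defs.
From HB Require Import structures.
From mathcomp Require Import all_boot all_order all_algebra.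
From mathcomp Require Import ring zify.
From Stdlib Require Import FunctionalExtensionality.
Import GRing.Theory.
Local Open Scope ring_scope.

Definition o0 : 'I_7 := @Ordinal 7 0 isT.
Definition o1 : 'I_7 := @Ordinal 7 1 isT.
Definition o2 : 'I_7 := @Ordinal 7 2 isT.
Definition o3 : 'I_7 := @Ordinal 7 3 isT.
Definition o4 : 'I_7 := @Ordinal 7 4 isT.
Definition o5 : 'I_7 := @Ordinal 7 5 isT.
Definition o6 : 'I_7 := @Ordinal 7 6 isT.
Definition ords : seq 'I_7 := [:: o0; o1; o2; o3; o4; o5; o6].
Definition ppf (i : 'I_7) : 'I_7 := nth o0 [:: o1; o2; o0; o2; o0; o1; o0] i.
Definition qqf (i : 'I_7) : 'I_7 := nth o0 [:: o2; o0; o1; o6; o3; o3; o5] i.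

Definition epsZ (i j l : 'I_7) : int :=
  if is_cyc_line i.+1 j.+1 l.+1 then 1
  else if is_cyc_line j.+1 i.+1 l.+1 then -1 else 0.

Definition epsTab : seq (seq (seq int)) := [:: [:: [:: 0; 0; 0; 0; 0; 0; 0]; [:: 0; 0; 1; 0; 0; 0; 0]; [:: 0; -1; 0; 0; 0; 0; 0]; [:: 0; 0; 0; 0; 1; 0; 0]; [:: 0; 0; 0; -1; 0; 0; 0]; [:: 0; 0; 0; 0; 0; 0; 1]; [:: 0; 0; 0; 0; 0; -1; 0]];
 [:: [:: 0; 0; -1; 0; 0; 0; 0]; [:: 0; 0; 0; 0; 0; 0; 0]; [:: 1; 0; 0; 0; 0; 0; 0]; [:: 0; 0; 0; 0; 0; 1; 0]; [:: 0; 0; 0; 0; 0; 0; -1]; [:: 0; 0; 0; -1; 0; 0; 0]; [:: 0; 0; 0; 0; 1; 0; 0]];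
 [:: [:: 0; 1; 0; 0; 0; 0; 0]; [:: -1; 0; 0; 0; 0; 0; 0]; [:: 0; 0; 0; 0; 0; 0; 0]; [:: 0; 0; 0; 0; 0; 0; -1]; [:: 0; 0; 0; 0; 0; -1; 0]; [:: 0; 0; 0; 0; 1; 0; 0]; [:: 0; 0; 0; 1; 0; 0; 0]];
 [:: [:: 0; 0; 0; 0; -1; 0; 0]; [:: 0; 0; 0; 0; 0; -1; 0]; [:: 0; 0; 0; 0; 0; 0; 1]; [:: 0; 0; 0; 0; 0; 0; 0]; [:: 1; 0; 0; 0; 0; 0; 0]; [:: 0; 1; 0; 0; 0; 0; 0]; [:: 0; 0; -1; 0; 0; 0; 0]];
 [:: [:: 0; 0; 0; 1; 0; 0; 0]; [:: 0; 0; 0; 0; 0; 0; 1]; [:: 0; 0; 0; 0; 0; 1; 0]; [:: -1; 0; 0; 0; 0; 0; 0]; [:: 0; 0; 0; 0; 0; 0; 0]; [:: 0; 0; -1; 0; 0; 0; 0]; [:: 0; -1; 0; 0; 0; 0; 0]];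
 [:: [:: 0; 0; 0; 0; 0; 0; -1]; [:: 0; 0; 0; 1; 0; 0; 0]; [:: 0; 0; 0; 0; -1; 0; 0]; [:: 0; -1; 0; 0; 0; 0; 0]; [:: 0; 0; 1; 0; 0; 0; 0]; [:: 0; 0; 0; 0; 0; 0; 0]; [:: 1; 0; 0; 0; 0; 0; 0]];
 [:: [:: 0; 0; 0; 0; 0; 1; 0]; [:: 0; 0; 0; 0; -1; 0; 0]; [:: 0; 0; 0; -1; 0; 0; 0]; [:: 0; 0; 1; 0; 0; 0; 0]; [:: 0; 1; 0; 0; 0; 0; 0]; [:: -1; 0; 0; 0; 0; 0; 0]; [:: 0; 0; 0; 0; 0; 0; 0]]].
Definition epsT (i j l : 'I_7) : int := nth 0 (nth [::] (nth [::] epsTab i) j) l.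

Definition rhoZ (a b : 'I_7) (w : word) : int :=
  (w == [:: a; b])%:R - \sum_(j <- ords) epsT a b j * (w == [:: ppf j; qqf j])%:R.
Definition twordZ (u : word) (w : word) : int := (w == u)%:R.
Definition tmulZ (x y : word -> int) (w : word) : int :=
  \sum_(i <- iota 0 (size w).+1) x (take i w) * y (drop i w).
Definition term := (int * (word * 'I_7 * 'I_7 * word))%type.
Definition gZ (t : word * 'I_7 * 'I_7 * word) (w : word) : int :=
  let: (u, a, b, v) := t in
  if (size w == size u + 2 + size v)%N && (take (size u) w == u) && (drop (size u + 2) w == v)
  then rhoZ a b (take 2 (drop (size u) w)) else 0.
Definition combo (c : seq term) (w : word) : int := \sum_(t <- c) t.1 * gZ t.2 w.
Definition w0 : word := [:: o0; o1; o2].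
Definition tgt3 (u w : word) : int :=
  twordZ u w - (match u with [:: a; b; c] => epsT a b c | _ => 0 end) * twordZ w0 w.
Definition words3 : seq word :=
  flatten (map (fun a => flatten (map (fun b => map (fun c => [:: a; b; c]) ords) ords)) ords).

Lemma mem_ords (i : 'I_7) : i \in ords.
Proof. by case: i => [[|[|[|[|[|[|[|m]]]]]]] Hm]. Qed.

Lemma ords_all1 (P : 'I_7 -> bool) : all P ords -> forall i, P i.
Proof. by move/allP => H i; apply: H; apply: mem_ords. Qed.

Lemma ords_all2 (P : 'I_7 -> 'I_7 -> bool) :
  all (fun i => all (P i) ords) ords -> forall i j, P i j.
Proof. by move=> H i; apply: ords_all1; move: i; apply: ords_all1. Qed.

Lemma ords_all3 (P : 'I_7 -> 'I_7 -> 'I_7 -> bool) :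
  all (fun i => all (fun j => all (P i j) ords) ords) ords -> forall i j l, P i j l.
Proof. by move=> H i j; apply: ords_all1; move: i j; apply: ords_all2. Qed.

Lemma epsT_Z i j l : epsT i j l = epsZ i j l.
Proof. apply/eqP; move: i j l; apply: ords_all3; by vm_compute. Qed.

Lemma epsT_cyc i j l : epsT i j l = epsT j l i.
Proof. apply/eqP; move: i j l; apply: ords_all3; by vm_compute. Qed.

Lemma epsT_pq i j : epsT (ppf i) (qqf i) j = (i == j)%:R.
Proof. apply/eqP; move: i j; apply: ords_all2; by vm_compute. Qed.

Lemma epsT_diag i j : epsT i i j = 0.
Proof. apply/eqP; move: i j; apply: ords_all2; by vm_compute. Qed.

Lemma epsT_w0 : epsT o0 o1 o2 = 1.
Proof. by vm_compute. Qed.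

Definition certs : seq (word * seq (int * (word * 'I_7 * 'I_7 * word))) := [:: 
([:: o0; o1; o2], [:: ]);
([:: o0; o0; o0], [:: (1, ([::], o0, o0, [:: o0]))]);
([:: o0; o0; o1], [:: (1, ([::], o0, o0, [:: o1]))]);
([:: o1; o0; o0], [:: (1, ([:: o1], o0, o0, [::]))]);
([:: o0; o0; o2], [:: (1, ([::], o0, o0, [:: o2]))]);
([:: o2; o0; o0], [:: (1, ([:: o2], o0, o0, [::]))]);
([:: o0; o0; o3], [:: (1, ([::], o0, o0, [:: o3]))]);
([:: o3; o0; o0], [:: (1, ([:: o3], o0, o0, [::]))]);
([:: o0; o0; o4], [:: (1, ([::], o0, o0, [:: o4]))]);
([:: o4; o0; o0], [:: (1, ([:: o4], o0, o0, [::]))]);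
([:: o0; o0; o5], [:: (1, ([::], o0, o0, [:: o5]))]);
([:: o5; o0; o0], [:: (1, ([:: o5], o0, o0, [::]))]);
([:: o0; o0; o6], [:: (1, ([::], o0, o0, [:: o6]))]);
([:: o6; o0; o0], [:: (1, ([:: o6], o0, o0, [::]))]);
([:: o0; o2; o0], [:: (1, ([::], o0, o2, [:: o0])); (-1, ([:: o2], o0, o0, [::]))]);
([:: o0; o2; o6], [:: (1, ([:: o0], o0, o4, [::])); (-1, ([::], o0, o0, [:: o4]))]);
([:: o0; o1; o3], [:: (1, ([:: o0], o0, o6, [::])); (-1, ([::], o0, o0, [:: o6]))]);
([:: o0; o1; o0], [:: (1, ([::], o1, o0, [:: o0])); (-1, ([:: o1], o0, o0, [::]))]);
([:: o1; o0; o2], [:: (1, ([::], o1, o0, [:: o2]))]);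
([:: o1; o0; o3], [:: (1, ([::], o1, o0, [:: o3])); (-1, ([:: o0], o0, o6, [::])); (1, ([::], o0, o0, [:: o6]))]);
([:: o1; o1; o0], [:: (1, ([::], o1, o1, [:: o0]))]);
([:: o0; o1; o1], [:: (1, ([:: o0], o1, o1, [::]))]);
([:: o1; o1; o1], [:: (1, ([::], o1, o1, [:: o1]))]);
([:: o1; o1; o2], [:: (1, ([::], o1, o1, [:: o2]))]);
([:: o2; o1; o1], [:: (1, ([:: o2], o1, o1, [::]))]);
([:: o1; o1; o3], [:: (1, ([::], o1, o1, [:: o3]))]);
([:: o3; o1; o1], [:: (1, ([:: o3], o1, o1, [::]))]);
([:: o1; o1; o4], [:: (1, ([::], o1, o1, [:: o4]))]);
([:: o4; o1; o1], [:: (1, ([:: o4], o1, o1, [::]))]);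
([:: o1; o1; o5], [:: (1, ([::], o1, o1, [:: o5]))]);
([:: o5; o1; o1], [:: (1, ([:: o5], o1, o1, [::]))]);
([:: o1; o1; o6], [:: (1, ([::], o1, o1, [:: o6]))]);
([:: o6; o1; o1], [:: (1, ([:: o6], o1, o1, [::]))]);
([:: o0; o1; o4], [:: (1, ([:: o0], o1, o4, [::])); (-1, ([::], o0, o0, [:: o5]))]);
([:: o1; o0; o5], [:: (1, ([:: o1], o1, o4, [::])); (-1, ([::], o1, o1, [:: o4]))]);
([:: o0; o1; o5], [:: (1, ([:: o0], o1, o5, [::])); (-1, ([:: o0], o0, o4, [::])); (1, ([::], o0, o0, [:: o4]))]);
([:: o1; o2; o6], [:: (1, ([:: o1], o1, o5, [::])); (-1, ([::], o1, o1, [:: o5]))]);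
([:: o0; o1; o6], [:: (1, ([:: o0], o1, o6, [::])); (1, ([::], o0, o0, [:: o3]))]);
([:: o0; o2; o1], [:: (1, ([:: o0], o2, o1, [::]))]);
([:: o1; o2; o1], [:: (1, ([::], o2, o1, [:: o1])); (-1, ([:: o2], o1, o1, [::]))]);
([:: o2; o1; o6], [:: (1, ([::], o2, o1, [:: o6])); (-1, ([:: o1], o1, o5, [::])); (1, ([::], o1, o1, [:: o5]))]);
([:: o2; o2; o0], [:: (1, ([::], o2, o2, [:: o0]))]);
([:: o0; o2; o2], [:: (1, ([:: o0], o2, o2, [::]))]);
([:: o2; o2; o1], [:: (1, ([::], o2, o2, [:: o1]))]);
([:: o1; o2; o2], [:: (1, ([:: o1], o2, o2, [::]))]);
([:: o2; o2; o2], [:: (1, ([::], o2, o2, [:: o2]))]);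
([:: o2; o2; o3], [:: (1, ([::], o2, o2, [:: o3]))]);
([:: o3; o2; o2], [:: (1, ([:: o3], o2, o2, [::]))]);
([:: o2; o2; o4], [:: (1, ([::], o2, o2, [:: o4]))]);
([:: o4; o2; o2], [:: (1, ([:: o4], o2, o2, [::]))]);
([:: o2; o2; o5], [:: (1, ([::], o2, o2, [:: o5]))]);
([:: o5; o2; o2], [:: (1, ([:: o5], o2, o2, [::]))]);
([:: o2; o2; o6], [:: (1, ([::], o2, o2, [:: o6]))]);
([:: o6; o2; o2], [:: (1, ([:: o6], o2, o2, [::]))]);
([:: o0; o2; o3], [:: (1, ([:: o0], o2, o3, [::])); (-1, ([::], o0, o0, [:: o5]))]);
([:: o1; o2; o3], [:: (1, ([:: o1], o2, o3, [::])); (-1, ([:: o1], o1, o4, [::])); (1, ([::], o1, o1, [:: o4]))]);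
([:: o2; o0; o5], [:: (1, ([:: o2], o2, o3, [::])); (-1, ([::], o2, o2, [:: o3]))]);
([:: o0; o2; o4], [:: (1, ([:: o0], o2, o4, [::])); (-1, ([:: o0], o0, o6, [::])); (1, ([::], o0, o0, [:: o6]))]);
([:: o1; o2; o4], [:: (1, ([:: o1], o2, o4, [::])); (-1, ([::], o1, o1, [:: o3]))]);
([:: o2; o1; o3], [:: (1, ([:: o2], o2, o4, [::])); (-1, ([::], o2, o2, [:: o4]))]);
([:: o0; o2; o5], [:: (1, ([:: o0], o2, o5, [::])); (1, ([::], o0, o0, [:: o3]))]);
([:: o1; o2; o5], [:: (1, ([:: o1], o2, o5, [::])); (1, ([::], o1, o0, [:: o3])); (-1, ([:: o0], o0, o6, [::])); (1, ([::], o0, o0, [:: o6]))]);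
([:: o2; o0; o3], [:: (-1, ([:: o2], o2, o5, [::])); (1, ([::], o2, o2, [:: o5]))]);
([:: o0; o3; o0], [:: (1, ([::], o3, o0, [:: o0])); (-1, ([:: o3], o0, o0, [::]))]);
([:: o1; o3; o0], [:: (1, ([:: o1], o3, o0, [::])); (-1, ([::], o1, o0, [:: o3])); (1, ([:: o0], o0, o6, [::])); (-1, ([::], o0, o0, [:: o6]))]);
([:: o2; o3; o0], [:: (1, ([:: o2], o3, o0, [::])); (1, ([:: o2], o2, o5, [::])); (-1, ([::], o2, o2, [:: o5]))]);
([:: o3; o1; o0], [:: (1, ([::], o3, o1, [:: o0])); (-1, ([:: o1], o3, o0, [::])); (1, ([::], o1, o0, [:: o3])); (-1, ([:: o0], o0, o6, [::])); (1, ([::], o0, o0, [:: o6]))]);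
([:: o0; o3; o1], [:: (1, ([:: o0], o3, o1, [::])); (-1, ([:: o0], o0, o6, [::])); (1, ([::], o0, o0, [:: o6]))]);
([:: o1; o3; o1], [:: (1, ([::], o3, o1, [:: o1])); (-1, ([:: o3], o1, o1, [::]))]);
([:: o2; o3; o1], [:: (1, ([:: o2], o3, o1, [::])); (-1, ([:: o2], o2, o4, [::])); (1, ([::], o2, o2, [:: o4]))]);
([:: o0; o3; o2], [:: (1, ([:: o0], o3, o2, [::])); (1, ([::], o0, o0, [:: o5]))]);
([:: o1; o3; o2], [:: (1, ([:: o1], o3, o2, [::])); (1, ([:: o1], o1, o4, [::])); (-1, ([::], o1, o1, [:: o4]))]);
([:: o0; o5; o2], [:: (-1, ([::], o3, o2, [:: o2])); (1, ([:: o3], o2, o2, [::]))]);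
([:: o2; o3; o2], [:: (1, ([:: o2], o3, o2, [::])); (1, ([:: o2], o2, o3, [::])); (-1, ([::], o2, o2, [:: o3]))]);
([:: o3; o3; o0], [:: (1, ([::], o3, o3, [:: o0]))]);
([:: o0; o3; o3], [:: (1, ([:: o0], o3, o3, [::]))]);
([:: o3; o3; o1], [:: (1, ([::], o3, o3, [:: o1]))]);
([:: o1; o3; o3], [:: (1, ([:: o1], o3, o3, [::]))]);
([:: o3; o3; o2], [:: (1, ([::], o3, o3, [:: o2]))]);
([:: o2; o3; o3], [:: (1, ([:: o2], o3, o3, [::]))]);
([:: o3; o3; o3], [:: (1, ([::], o3, o3, [:: o3]))]);
([:: o3; o3; o4], [:: (1, ([::], o3, o3, [:: o4]))]);
([:: o4; o3; o3], [:: (1, ([:: o4], o3, o3, [::]))]);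
([:: o3; o3; o5], [:: (1, ([::], o3, o3, [:: o5]))]);
([:: o5; o3; o3], [:: (1, ([:: o5], o3, o3, [::]))]);
([:: o3; o3; o6], [:: (1, ([::], o3, o3, [:: o6]))]);
([:: o6; o3; o3], [:: (1, ([:: o6], o3, o3, [::]))]);
([:: o0; o3; o4], [:: (1, ([:: o0], o3, o4, [::]))]);
([:: o3; o4; o1], [:: (1, ([::], o3, o4, [:: o1])); (1, ([::], o2, o1, [:: o1])); (-1, ([:: o2], o1, o1, [::]))]);
([:: o1; o3; o4], [:: (1, ([:: o1], o3, o4, [::])); (1, ([::], o1, o1, [:: o2]))]);
([:: o3; o4; o2], [:: (1, ([::], o3, o4, [:: o2])); (1, ([:: o1], o2, o2, [::]))]);
([:: o3; o4; o3], [:: (1, ([::], o3, o4, [:: o3])); (1, ([:: o1], o2, o3, [::])); (-1, ([:: o1], o1, o4, [::])); (1, ([::], o1, o1, [:: o4]))]);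
([:: o3; o1; o2], [:: (-1, ([:: o3], o3, o4, [::])); (1, ([::], o3, o3, [:: o4]))]);
([:: o3; o4; o4], [:: (1, ([::], o3, o4, [:: o4])); (1, ([:: o1], o2, o4, [::])); (-1, ([::], o1, o1, [:: o3]))]);
([:: o3; o4; o5], [:: (1, ([::], o3, o4, [:: o5])); (1, ([:: o1], o2, o5, [::])); (1, ([::], o1, o0, [:: o3])); (-1, ([:: o0], o0, o6, [::])); (1, ([::], o0, o0, [:: o6]))]);
([:: o3; o4; o6], [:: (1, ([::], o3, o4, [:: o6])); (1, ([:: o1], o1, o5, [::])); (-1, ([::], o1, o1, [:: o5]))]);
([:: o3; o5; o0], [:: (1, ([::], o3, o5, [:: o0])); (1, ([:: o2], o0, o0, [::]))]);
([:: o0; o3; o5], [:: (1, ([:: o0], o3, o5, [::])); (1, ([::], o0, o2, [:: o0])); (-1, ([:: o2], o0, o0, [::]))]);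
([:: o2; o3; o5], [:: (1, ([:: o2], o3, o5, [::])); (1, ([::], o2, o2, [:: o0]))]);
([:: o3; o5; o3], [:: (1, ([::], o3, o5, [:: o3])); (-1, ([:: o2], o2, o5, [::])); (1, ([::], o2, o2, [:: o5]))]);
([:: o3; o2; o0], [:: (-1, ([:: o3], o3, o5, [::])); (1, ([::], o3, o3, [:: o5]))]);
([:: o3; o5; o5], [:: (1, ([::], o3, o5, [:: o5])); (1, ([:: o2], o2, o3, [::])); (-1, ([::], o2, o2, [:: o3]))]);
([:: o3; o6; o0], [:: (1, ([::], o3, o6, [:: o0])); (-1, ([::], o1, o0, [:: o0])); (1, ([:: o1], o0, o0, [::]))]);
([:: o0; o3; o6], [:: (1, ([:: o0], o3, o6, [::])); (-1, ([::], o0, o0, [:: o1]))]);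
([:: o3; o6; o1], [:: (1, ([::], o3, o6, [:: o1])); (-1, ([:: o0], o1, o1, [::]))]);
([:: o3; o6; o2], [:: (1, ([::], o3, o6, [:: o2]))]);
([:: o3; o6; o3], [:: (1, ([::], o3, o6, [:: o3])); (-1, ([:: o0], o0, o6, [::])); (1, ([::], o0, o0, [:: o6]))]);
([:: o3; o0; o1], [:: (1, ([:: o3], o3, o6, [::])); (-1, ([::], o3, o3, [:: o6]))]);
([:: o3; o6; o4], [:: (1, ([::], o3, o6, [:: o4])); (-1, ([:: o0], o1, o4, [::])); (1, ([::], o0, o0, [:: o5]))]);
([:: o3; o6; o5], [:: (1, ([::], o3, o6, [:: o5])); (-1, ([:: o0], o1, o5, [::])); (1, ([:: o0], o0, o4, [::])); (-1, ([::], o0, o0, [:: o4]))]);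
([:: o3; o6; o6], [:: (1, ([::], o3, o6, [:: o6])); (-1, ([:: o0], o1, o6, [::])); (-1, ([::], o0, o0, [:: o3]))]);
([:: o2; o6; o0], [:: (-1, ([::], o4, o0, [:: o0])); (1, ([:: o4], o0, o0, [::]))]);
([:: o0; o4; o0], [:: (1, ([:: o0], o4, o0, [::])); (1, ([:: o0], o0, o4, [::])); (-1, ([::], o0, o0, [:: o4]))]);
([:: o1; o4; o0], [:: (1, ([:: o1], o4, o0, [::])); (1, ([:: o1], o1, o5, [::])); (-1, ([::], o1, o1, [:: o5]))]);
([:: o2; o4; o0], [:: (1, ([:: o2], o4, o0, [::])); (1, ([::], o2, o2, [:: o6]))]);
([:: o0; o4; o1], [:: (1, ([:: o0], o4, o1, [::])); (1, ([::], o0, o0, [:: o5]))]);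
([:: o0; o5; o1], [:: (-1, ([::], o4, o1, [:: o1])); (1, ([:: o4], o1, o1, [::]))]);
([:: o1; o4; o1], [:: (1, ([:: o1], o4, o1, [::])); (1, ([:: o1], o1, o4, [::])); (-1, ([::], o1, o1, [:: o4]))]);
([:: o4; o1; o2], [:: (1, ([::], o4, o1, [:: o2])); (-1, ([::], o3, o2, [:: o2])); (1, ([:: o3], o2, o2, [::]))]);
([:: o2; o4; o1], [:: (1, ([:: o2], o4, o1, [::])); (1, ([:: o2], o2, o3, [::])); (-1, ([::], o2, o2, [:: o3]))]);
([:: o3; o0; o5], [:: (-1, ([:: o3], o4, o1, [::])); (1, ([::], o3, o4, [:: o1])); (1, ([::], o2, o1, [:: o1])); (-1, ([:: o2], o1, o1, [::]))]);
([:: o4; o2; o0], [:: (1, ([::], o4, o2, [:: o0])); (1, ([:: o1], o3, o0, [::])); (-1, ([::], o1, o0, [:: o3])); (1, ([:: o0], o0, o6, [::])); (-1, ([::], o0, o0, [:: o6]))]);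
([:: o0; o4; o2], [:: (1, ([:: o0], o4, o2, [::])); (1, ([:: o0], o0, o6, [::])); (-1, ([::], o0, o0, [:: o6]))]);
([:: o4; o2; o1], [:: (1, ([::], o4, o2, [:: o1])); (1, ([::], o3, o1, [:: o1])); (-1, ([:: o3], o1, o1, [::]))]);
([:: o1; o4; o2], [:: (1, ([:: o1], o4, o2, [::])); (1, ([::], o1, o1, [:: o3]))]);
([:: o2; o4; o2], [:: (1, ([:: o2], o4, o2, [::])); (1, ([:: o2], o2, o4, [::])); (-1, ([::], o2, o2, [:: o4]))]);
([:: o4; o2; o3], [:: (1, ([::], o4, o2, [:: o3])); (1, ([:: o1], o3, o3, [::]))]);
([:: o3; o1; o3], [:: (-1, ([:: o3], o4, o2, [::])); (1, ([::], o3, o4, [:: o2])); (1, ([:: o1], o2, o2, [::]))]);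
([:: o4; o2; o4], [:: (1, ([::], o4, o2, [:: o4])); (1, ([:: o1], o3, o4, [::])); (1, ([::], o1, o1, [:: o2]))]);
([:: o0; o4; o3], [:: (1, ([:: o0], o4, o3, [::]))]);
([:: o4; o3; o1], [:: (1, ([::], o4, o3, [:: o1])); (-1, ([::], o2, o1, [:: o1])); (1, ([:: o2], o1, o1, [::]))]);
([:: o1; o4; o3], [:: (1, ([:: o1], o4, o3, [::])); (-1, ([::], o1, o1, [:: o2]))]);
([:: o4; o3; o2], [:: (1, ([::], o4, o3, [:: o2])); (-1, ([:: o1], o2, o2, [::]))]);
([:: o4; o3; o4], [:: (1, ([::], o4, o3, [:: o4])); (-1, ([:: o1], o2, o4, [::])); (1, ([::], o1, o1, [:: o3]))]);
([:: o4; o4; o3], [:: (1, ([:: o4], o4, o3, [::])); (-1, ([::], o4, o1, [:: o2])); (1, ([::], o3, o2, [:: o2])); (-1, ([:: o3], o2, o2, [::]))]);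
([:: o4; o3; o5], [:: (1, ([::], o4, o3, [:: o5])); (-1, ([:: o1], o2, o5, [::])); (-1, ([::], o1, o0, [:: o3])); (1, ([:: o0], o0, o6, [::])); (-1, ([::], o0, o0, [:: o6]))]);
([:: o4; o3; o6], [:: (1, ([::], o4, o3, [:: o6])); (-1, ([:: o1], o1, o5, [::])); (1, ([::], o1, o1, [:: o5]))]);
([:: o4; o4; o0], [:: (1, ([::], o4, o4, [:: o0]))]);
([:: o0; o4; o4], [:: (1, ([:: o0], o4, o4, [::]))]);
([:: o4; o4; o1], [:: (1, ([::], o4, o4, [:: o1]))]);
([:: o1; o4; o4], [:: (1, ([:: o1], o4, o4, [::]))]);
([:: o4; o4; o2], [:: (1, ([::], o4, o4, [:: o2]))]);
([:: o2; o4; o4], [:: (1, ([:: o2], o4, o4, [::]))]);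
([:: o4; o4; o4], [:: (1, ([::], o4, o4, [:: o4]))]);
([:: o4; o4; o5], [:: (1, ([::], o4, o4, [:: o5]))]);
([:: o5; o4; o4], [:: (1, ([:: o5], o4, o4, [::]))]);
([:: o4; o4; o6], [:: (1, ([::], o4, o4, [:: o6]))]);
([:: o6; o4; o4], [:: (1, ([:: o6], o4, o4, [::]))]);
([:: o4; o5; o0], [:: (1, ([::], o4, o5, [:: o0])); (-1, ([::], o1, o0, [:: o0])); (1, ([:: o1], o0, o0, [::]))]);
([:: o0; o4; o5], [:: (1, ([:: o0], o4, o5, [::])); (-1, ([::], o0, o0, [:: o1]))]);
([:: o4; o5; o1], [:: (1, ([::], o4, o5, [:: o1])); (-1, ([:: o0], o1, o1, [::]))]);
([:: o4; o5; o2], [:: (1, ([::], o4, o5, [:: o2]))]);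
([:: o4; o5; o3], [:: (1, ([::], o4, o5, [:: o3])); (-1, ([:: o0], o0, o6, [::])); (1, ([::], o0, o0, [:: o6]))]);
([:: o4; o5; o4], [:: (1, ([::], o4, o5, [:: o4])); (-1, ([:: o0], o1, o4, [::])); (1, ([::], o0, o0, [:: o5]))]);
([:: o4; o0; o1], [:: (1, ([:: o4], o4, o5, [::])); (-1, ([::], o4, o4, [:: o5]))]);
([:: o4; o5; o5], [:: (1, ([::], o4, o5, [:: o5])); (-1, ([:: o0], o1, o5, [::])); (1, ([:: o0], o0, o4, [::])); (-1, ([::], o0, o0, [:: o4]))]);
([:: o4; o5; o6], [:: (1, ([::], o4, o5, [:: o6])); (-1, ([:: o0], o1, o6, [::])); (-1, ([::], o0, o0, [:: o3]))]);
([:: o4; o6; o0], [:: (1, ([::], o4, o6, [:: o0])); (-1, ([:: o2], o0, o0, [::]))]);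
([:: o0; o4; o6], [:: (1, ([:: o0], o4, o6, [::])); (-1, ([::], o0, o2, [:: o0])); (1, ([:: o2], o0, o0, [::]))]);
([:: o2; o4; o6], [:: (1, ([:: o2], o4, o6, [::])); (-1, ([::], o2, o2, [:: o0]))]);
([:: o4; o6; o3], [:: (1, ([::], o4, o6, [:: o3])); (1, ([:: o2], o2, o5, [::])); (-1, ([::], o2, o2, [:: o5]))]);
([:: o4; o6; o5], [:: (1, ([::], o4, o6, [:: o5])); (-1, ([:: o2], o2, o3, [::])); (1, ([::], o2, o2, [:: o3]))]);
([:: o0; o5; o0], [:: (1, ([::], o5, o0, [:: o0])); (-1, ([:: o5], o0, o0, [::]))]);
([:: o5; o0; o1], [:: (1, ([::], o5, o0, [:: o1])); (1, ([::], o4, o1, [:: o1])); (-1, ([:: o4], o1, o1, [::]))]);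
([:: o1; o5; o0], [:: (1, ([:: o1], o5, o0, [::])); (-1, ([:: o1], o1, o4, [::])); (1, ([::], o1, o1, [:: o4]))]);
([:: o5; o0; o2], [:: (1, ([::], o5, o0, [:: o2])); (1, ([::], o3, o2, [:: o2])); (-1, ([:: o3], o2, o2, [::]))]);
([:: o2; o5; o0], [:: (1, ([:: o2], o5, o0, [::])); (-1, ([:: o2], o2, o3, [::])); (1, ([::], o2, o2, [:: o3]))]);
([:: o4; o0; o5], [:: (1, ([:: o4], o5, o0, [::])); (-1, ([::], o4, o5, [:: o0])); (1, ([::], o1, o0, [:: o0])); (-1, ([:: o1], o0, o0, [::]))]);
([:: o5; o1; o0], [:: (1, ([::], o5, o1, [:: o0])); (-1, ([::], o4, o0, [:: o0])); (1, ([:: o4], o0, o0, [::]))]);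
([:: o2; o6; o1], [:: (-1, ([::], o5, o1, [:: o1])); (1, ([:: o5], o1, o1, [::]))]);
([:: o1; o5; o1], [:: (1, ([:: o1], o5, o1, [::])); (1, ([:: o1], o1, o5, [::])); (-1, ([::], o1, o1, [:: o5]))]);
([:: o2; o5; o1], [:: (1, ([:: o2], o5, o1, [::])); (1, ([::], o2, o2, [:: o6]))]);
([:: o4; o2; o6], [:: (-1, ([:: o4], o5, o1, [::])); (1, ([::], o4, o5, [:: o1])); (-1, ([:: o0], o1, o1, [::]))]);
([:: o5; o2; o0], [:: (1, ([::], o5, o2, [:: o0])); (-1, ([::], o3, o0, [:: o0])); (1, ([:: o3], o0, o0, [::]))]);
([:: o5; o2; o1], [:: (1, ([::], o5, o2, [:: o1])); (-1, ([:: o0], o3, o1, [::])); (1, ([:: o0], o0, o6, [::])); (-1, ([::], o0, o0, [:: o6]))]);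
([:: o1; o5; o2], [:: (1, ([:: o1], o5, o2, [::])); (-1, ([::], o1, o0, [:: o3])); (1, ([:: o0], o0, o6, [::])); (-1, ([::], o0, o0, [:: o6]))]);
([:: o2; o5; o2], [:: (1, ([:: o2], o5, o2, [::])); (1, ([:: o2], o2, o5, [::])); (-1, ([::], o2, o2, [:: o5]))]);
([:: o5; o2; o3], [:: (1, ([::], o5, o2, [:: o3])); (-1, ([:: o0], o3, o3, [::]))]);
([:: o5; o2; o4], [:: (1, ([::], o5, o2, [:: o4])); (-1, ([:: o0], o3, o4, [::]))]);
([:: o4; o0; o3], [:: (1, ([:: o4], o5, o2, [::])); (-1, ([::], o4, o5, [:: o2]))]);
([:: o5; o2; o5], [:: (1, ([::], o5, o2, [:: o5])); (-1, ([:: o0], o3, o5, [::])); (-1, ([::], o0, o2, [:: o0])); (1, ([:: o2], o0, o0, [::]))]);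
([:: o5; o2; o6], [:: (1, ([::], o5, o2, [:: o6])); (-1, ([:: o0], o3, o6, [::])); (1, ([::], o0, o0, [:: o1]))]);
([:: o5; o3; o0], [:: (1, ([::], o5, o3, [:: o0])); (-1, ([:: o2], o0, o0, [::]))]);
([:: o0; o5; o3], [:: (1, ([:: o0], o5, o3, [::])); (-1, ([::], o0, o2, [:: o0])); (1, ([:: o2], o0, o0, [::]))]);
([:: o2; o5; o3], [:: (1, ([:: o2], o5, o3, [::])); (-1, ([::], o2, o2, [:: o0]))]);
([:: o5; o3; o5], [:: (1, ([::], o5, o3, [:: o5])); (-1, ([:: o2], o2, o3, [::])); (1, ([::], o2, o2, [:: o3]))]);
([:: o5; o5; o3], [:: (1, ([:: o5], o5, o3, [::])); (-1, ([::], o5, o2, [:: o0])); (1, ([::], o3, o0, [:: o0])); (-1, ([:: o3], o0, o0, [::]))]);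
([:: o5; o4; o0], [:: (1, ([::], o5, o4, [:: o0])); (1, ([::], o1, o0, [:: o0])); (-1, ([:: o1], o0, o0, [::]))]);
([:: o0; o5; o4], [:: (1, ([:: o0], o5, o4, [::])); (1, ([::], o0, o0, [:: o1]))]);
([:: o5; o4; o1], [:: (1, ([::], o5, o4, [:: o1])); (1, ([:: o0], o1, o1, [::]))]);
([:: o5; o4; o2], [:: (1, ([::], o5, o4, [:: o2]))]);
([:: o5; o4; o3], [:: (1, ([::], o5, o4, [:: o3])); (1, ([:: o0], o0, o6, [::])); (-1, ([::], o0, o0, [:: o6]))]);
([:: o3; o5; o4], [:: (1, ([:: o3], o5, o4, [::])); (1, ([:: o3], o3, o6, [::])); (-1, ([::], o3, o3, [:: o6]))]);
([:: o5; o4; o5], [:: (1, ([::], o5, o4, [:: o5])); (1, ([:: o0], o1, o5, [::])); (-1, ([:: o0], o0, o4, [::])); (1, ([::], o0, o0, [:: o4]))]);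
([:: o5; o5; o4], [:: (1, ([:: o5], o5, o4, [::])); (1, ([::], o5, o0, [:: o1])); (1, ([::], o4, o1, [:: o1])); (-1, ([:: o4], o1, o1, [::]))]);
([:: o5; o4; o6], [:: (1, ([::], o5, o4, [:: o6])); (1, ([:: o0], o1, o6, [::])); (1, ([::], o0, o0, [:: o3]))]);
([:: o5; o5; o0], [:: (1, ([::], o5, o5, [:: o0]))]);
([:: o0; o5; o5], [:: (1, ([:: o0], o5, o5, [::]))]);
([:: o5; o5; o1], [:: (1, ([::], o5, o5, [:: o1]))]);
([:: o1; o5; o5], [:: (1, ([:: o1], o5, o5, [::]))]);
([:: o5; o5; o2], [:: (1, ([::], o5, o5, [:: o2]))]);
([:: o2; o5; o5], [:: (1, ([:: o2], o5, o5, [::]))]);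
([:: o5; o5; o5], [:: (1, ([::], o5, o5, [:: o5]))]);
([:: o5; o5; o6], [:: (1, ([::], o5, o5, [:: o6]))]);
([:: o6; o5; o5], [:: (1, ([:: o6], o5, o5, [::]))]);
([:: o0; o5; o6], [:: (1, ([:: o0], o5, o6, [::]))]);
([:: o5; o6; o1], [:: (1, ([::], o5, o6, [:: o1])); (1, ([::], o2, o1, [:: o1])); (-1, ([:: o2], o1, o1, [::]))]);
([:: o1; o5; o6], [:: (1, ([:: o1], o5, o6, [::])); (1, ([::], o1, o1, [:: o2]))]);
([:: o5; o6; o2], [:: (1, ([::], o5, o6, [:: o2])); (1, ([:: o1], o2, o2, [::]))]);
([:: o5; o6; o3], [:: (1, ([::], o5, o6, [:: o3])); (1, ([:: o1], o2, o3, [::])); (-1, ([:: o1], o1, o4, [::])); (1, ([::], o1, o1, [:: o4]))]);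
([:: o3; o5; o6], [:: (1, ([:: o3], o5, o6, [::])); (-1, ([:: o3], o3, o4, [::])); (1, ([::], o3, o3, [:: o4]))]);
([:: o5; o6; o4], [:: (1, ([::], o5, o6, [:: o4])); (1, ([:: o1], o2, o4, [::])); (-1, ([::], o1, o1, [:: o3]))]);
([:: o5; o6; o5], [:: (1, ([::], o5, o6, [:: o5])); (1, ([:: o1], o2, o5, [::])); (1, ([::], o1, o0, [:: o3])); (-1, ([:: o0], o0, o6, [::])); (1, ([::], o0, o0, [:: o6]))]);
([:: o5; o1; o2], [:: (-1, ([:: o5], o5, o6, [::])); (1, ([::], o5, o5, [:: o6]))]);
([:: o5; o6; o6], [:: (1, ([::], o5, o6, [:: o6])); (1, ([:: o1], o1, o5, [::])); (-1, ([::], o1, o1, [:: o5]))]);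
([:: o0; o6; o0], [:: (1, ([:: o0], o6, o0, [::])); (1, ([:: o0], o0, o6, [::])); (-1, ([::], o0, o0, [:: o6]))]);
([:: o6; o0; o1], [:: (1, ([::], o6, o0, [:: o1])); (1, ([::], o3, o1, [:: o1])); (-1, ([:: o3], o1, o1, [::]))]);
([:: o1; o6; o0], [:: (1, ([:: o1], o6, o0, [::])); (1, ([::], o1, o1, [:: o3]))]);
([:: o6; o0; o2], [:: (1, ([::], o6, o0, [:: o2])); (1, ([:: o1], o3, o2, [::])); (1, ([:: o1], o1, o4, [::])); (-1, ([::], o1, o1, [:: o4]))]);
([:: o6; o0; o3], [:: (1, ([::], o6, o0, [:: o3])); (1, ([:: o1], o3, o3, [::]))]);
([:: o6; o0; o4], [:: (1, ([::], o6, o0, [:: o4])); (1, ([:: o1], o3, o4, [::])); (1, ([::], o1, o1, [:: o2]))]);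
([:: o4; o1; o3], [:: (-1, ([:: o4], o6, o0, [::])); (1, ([::], o4, o6, [:: o0])); (-1, ([:: o2], o0, o0, [::]))]);
([:: o6; o1; o0], [:: (1, ([::], o6, o1, [:: o0])); (-1, ([::], o3, o0, [:: o0])); (1, ([:: o3], o0, o0, [::]))]);
([:: o0; o6; o1], [:: (1, ([:: o0], o6, o1, [::])); (-1, ([::], o0, o0, [:: o3]))]);
([:: o1; o6; o1], [:: (1, ([:: o1], o6, o1, [::])); (-1, ([::], o1, o0, [:: o3])); (1, ([:: o0], o0, o6, [::])); (-1, ([::], o0, o0, [:: o6]))]);
([:: o6; o1; o2], [:: (1, ([::], o6, o1, [:: o2])); (-1, ([:: o0], o3, o2, [::])); (-1, ([::], o0, o0, [:: o5]))]);
([:: o6; o1; o3], [:: (1, ([::], o6, o1, [:: o3])); (-1, ([:: o0], o3, o3, [::]))]);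
([:: o3; o0; o3], [:: (1, ([:: o3], o6, o1, [::])); (-1, ([::], o3, o6, [:: o1])); (1, ([:: o0], o1, o1, [::]))]);
([:: o6; o1; o4], [:: (1, ([::], o6, o1, [:: o4])); (-1, ([:: o0], o3, o4, [::]))]);
([:: o4; o6; o1], [:: (1, ([:: o4], o6, o1, [::])); (-1, ([:: o4], o5, o2, [::])); (1, ([::], o4, o5, [:: o2]))]);
([:: o6; o1; o5], [:: (1, ([::], o6, o1, [:: o5])); (-1, ([:: o0], o3, o5, [::])); (-1, ([::], o0, o2, [:: o0])); (1, ([:: o2], o0, o0, [::]))]);
([:: o5; o0; o3], [:: (1, ([:: o5], o6, o1, [::])); (-1, ([::], o5, o6, [:: o1])); (-1, ([::], o2, o1, [:: o1])); (1, ([:: o2], o1, o1, [::]))]);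
([:: o6; o1; o6], [:: (1, ([::], o6, o1, [:: o6])); (-1, ([:: o0], o3, o6, [::])); (1, ([::], o0, o0, [:: o1]))]);
([:: o6; o6; o1], [:: (1, ([:: o6], o6, o1, [::])); (-1, ([::], o6, o0, [:: o3])); (-1, ([:: o1], o3, o3, [::]))]);
([:: o6; o2; o0], [:: (1, ([::], o6, o2, [:: o0])); (1, ([::], o4, o0, [:: o0])); (-1, ([:: o4], o0, o0, [::]))]);
([:: o0; o6; o2], [:: (1, ([:: o0], o6, o2, [::])); (-1, ([:: o0], o0, o4, [::])); (1, ([::], o0, o0, [:: o4]))]);
([:: o6; o2; o1], [:: (1, ([::], o6, o2, [:: o1])); (1, ([::], o5, o1, [:: o1])); (-1, ([:: o5], o1, o1, [::]))]);
([:: o1; o6; o2], [:: (1, ([:: o1], o6, o2, [::])); (-1, ([:: o1], o1, o5, [::])); (1, ([::], o1, o1, [:: o5]))]);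
([:: o2; o6; o2], [:: (1, ([::], o6, o2, [:: o2])); (-1, ([:: o6], o2, o2, [::]))]);
([:: o3; o2; o6], [:: (1, ([:: o3], o6, o2, [::])); (-1, ([::], o3, o6, [:: o2]))]);
([:: o4; o6; o2], [:: (1, ([:: o4], o6, o2, [::])); (1, ([:: o4], o5, o1, [::])); (-1, ([::], o4, o5, [:: o1])); (1, ([:: o0], o1, o1, [::]))]);
([:: o6; o3; o0], [:: (1, ([::], o6, o3, [:: o0])); (1, ([::], o1, o0, [:: o0])); (-1, ([:: o1], o0, o0, [::]))]);
([:: o0; o6; o3], [:: (1, ([:: o0], o6, o3, [::])); (1, ([::], o0, o0, [:: o1]))]);
([:: o6; o3; o1], [:: (1, ([::], o6, o3, [:: o1])); (1, ([:: o0], o1, o1, [::]))]);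
([:: o6; o3; o2], [:: (1, ([::], o6, o3, [:: o2]))]);
([:: o6; o3; o4], [:: (1, ([::], o6, o3, [:: o4])); (1, ([:: o0], o1, o4, [::])); (-1, ([::], o0, o0, [:: o5]))]);
([:: o6; o3; o5], [:: (1, ([::], o6, o3, [:: o5])); (1, ([:: o0], o1, o5, [::])); (-1, ([:: o0], o0, o4, [::])); (1, ([::], o0, o0, [:: o4]))]);
([:: o6; o3; o6], [:: (1, ([::], o6, o3, [:: o6])); (1, ([:: o0], o1, o6, [::])); (1, ([::], o0, o0, [:: o3]))]);
([:: o6; o6; o3], [:: (1, ([:: o6], o6, o3, [::])); (1, ([::], o6, o0, [:: o1])); (1, ([::], o3, o1, [:: o1])); (-1, ([:: o3], o1, o1, [::]))]);
([:: o6; o4; o0], [:: (1, ([::], o6, o4, [:: o0])); (1, ([:: o2], o0, o0, [::]))]);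
([:: o0; o6; o4], [:: (1, ([:: o0], o6, o4, [::])); (1, ([::], o0, o2, [:: o0])); (-1, ([:: o2], o0, o0, [::]))]);
([:: o2; o6; o4], [:: (1, ([:: o2], o6, o4, [::])); (1, ([::], o2, o2, [:: o0]))]);
([:: o6; o4; o3], [:: (1, ([::], o6, o4, [:: o3])); (-1, ([:: o2], o2, o5, [::])); (1, ([::], o2, o2, [:: o5]))]);
([:: o2; o0; o4], [:: (-1, ([::], o6, o4, [:: o4])); (1, ([:: o6], o4, o4, [::]))]);
([:: o4; o6; o4], [:: (1, ([:: o4], o6, o4, [::])); (1, ([::], o4, o2, [:: o0])); (1, ([:: o1], o3, o0, [::])); (-1, ([::], o1, o0, [:: o3])); (1, ([:: o0], o0, o6, [::])); (-1, ([::], o0, o0, [:: o6]))]);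
([:: o6; o4; o5], [:: (1, ([::], o6, o4, [:: o5])); (1, ([:: o2], o2, o3, [::])); (-1, ([::], o2, o2, [:: o3]))]);
([:: o6; o6; o4], [:: (1, ([:: o6], o6, o4, [::])); (1, ([::], o6, o2, [:: o0])); (1, ([::], o4, o0, [:: o0])); (-1, ([:: o4], o0, o0, [::]))]);
([:: o0; o6; o5], [:: (1, ([:: o0], o6, o5, [::]))]);
([:: o6; o5; o1], [:: (1, ([::], o6, o5, [:: o1])); (-1, ([::], o2, o1, [:: o1])); (1, ([:: o2], o1, o1, [::]))]);
([:: o1; o6; o5], [:: (1, ([:: o1], o6, o5, [::])); (-1, ([::], o1, o1, [:: o2]))]);
([:: o6; o5; o2], [:: (1, ([::], o6, o5, [:: o2])); (-1, ([:: o1], o2, o2, [::]))]);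
([:: o6; o5; o3], [:: (1, ([::], o6, o5, [:: o3])); (-1, ([:: o1], o2, o3, [::])); (1, ([:: o1], o1, o4, [::])); (-1, ([::], o1, o1, [:: o4]))]);
([:: o6; o5; o4], [:: (1, ([::], o6, o5, [:: o4])); (-1, ([:: o1], o2, o4, [::])); (1, ([::], o1, o1, [:: o3]))]);
([:: o6; o5; o6], [:: (1, ([::], o6, o5, [:: o6])); (-1, ([:: o1], o1, o5, [::])); (1, ([::], o1, o1, [:: o5]))]);
([:: o6; o6; o5], [:: (1, ([:: o6], o6, o5, [::])); (-1, ([::], o6, o1, [:: o2])); (1, ([:: o0], o3, o2, [::])); (1, ([::], o0, o0, [:: o5]))]);
([:: o6; o6; o0], [:: (1, ([::], o6, o6, [:: o0]))]);
([:: o0; o6; o6], [:: (1, ([:: o0], o6, o6, [::]))]);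
([:: o1; o6; o6], [:: (1, ([:: o1], o6, o6, [::]))]);
([:: o6; o6; o2], [:: (1, ([::], o6, o6, [:: o2]))]);
([:: o2; o6; o6], [:: (1, ([:: o2], o6, o6, [::]))]);
([:: o4; o6; o6], [:: (1, ([:: o4], o6, o6, [::]))]);
([:: o6; o6; o6], [:: (1, ([::], o6, o6, [:: o6]))]);
([:: o2; o0; o1], [:: (1, ([::], o0, o2, [:: o1])); (-1, ([:: o0], o2, o1, [::]))]);
([:: o1; o2; o0], [:: (1, ([:: o1], o0, o2, [::])); (-1, ([::], o1, o0, [:: o2]))]);
([:: o2; o0; o2], [:: (1, ([::], o0, o2, [:: o2])); (-1, ([:: o0], o2, o2, [::]))]);
([:: o3; o0; o2], [:: (1, ([:: o3], o0, o2, [::])); (1, ([:: o3], o3, o5, [::])); (-1, ([::], o3, o3, [:: o5]))]);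
([:: o4; o0; o2], [:: (1, ([:: o4], o0, o2, [::])); (-1, ([::], o4, o2, [:: o0])); (-1, ([:: o1], o3, o0, [::])); (1, ([::], o1, o0, [:: o3])); (-1, ([:: o0], o0, o6, [::])); (1, ([::], o0, o0, [:: o6]))]);
([:: o2; o0; o6], [:: (1, ([::], o0, o2, [:: o6])); (-1, ([:: o0], o0, o4, [::])); (1, ([::], o0, o0, [:: o4]))]);
([:: o1; o0; o4], [:: (1, ([:: o1], o0, o4, [::])); (-1, ([:: o1], o1, o5, [::])); (1, ([::], o1, o1, [:: o5]))]);
([:: o2; o6; o3], [:: (1, ([::], o0, o4, [:: o3])); (-1, ([:: o0], o4, o3, [::]))]);
([:: o3; o0; o4], [:: (1, ([:: o3], o0, o4, [::])); (-1, ([:: o3], o6, o2, [::])); (1, ([::], o3, o6, [:: o2]))]);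
([:: o4; o0; o4], [:: (1, ([:: o4], o0, o4, [::])); (1, ([:: o4], o5, o1, [::])); (-1, ([::], o4, o5, [:: o1])); (1, ([:: o0], o1, o1, [::]))]);
([:: o2; o6; o5], [:: (1, ([::], o0, o4, [:: o5])); (-1, ([:: o0], o4, o5, [::])); (1, ([::], o0, o0, [:: o1]))]);
([:: o5; o0; o4], [:: (1, ([:: o5], o0, o4, [::])); (-1, ([::], o5, o2, [:: o6])); (1, ([:: o0], o3, o6, [::])); (-1, ([::], o0, o0, [:: o1]))]);
([:: o6; o2; o6], [:: (1, ([:: o6], o0, o4, [::])); (-1, ([::], o6, o0, [:: o4])); (-1, ([:: o1], o3, o4, [::])); (-1, ([::], o1, o1, [:: o2]))]);
([:: o1; o0; o6], [:: (1, ([:: o1], o0, o6, [::])); (-1, ([::], o1, o1, [:: o3]))]);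
([:: o3; o0; o6], [:: (1, ([:: o3], o0, o6, [::])); (1, ([:: o3], o4, o2, [::])); (-1, ([::], o3, o4, [:: o2])); (-1, ([:: o1], o2, o2, [::]))]);
([:: o4; o0; o6], [:: (1, ([:: o4], o0, o6, [::])); (1, ([:: o4], o6, o0, [::])); (-1, ([::], o4, o6, [:: o0])); (1, ([:: o2], o0, o0, [::]))]);
([:: o1; o3; o5], [:: (1, ([::], o0, o6, [:: o5])); (-1, ([:: o0], o6, o5, [::]))]);
([:: o1; o3; o6], [:: (1, ([::], o0, o6, [:: o6])); (-1, ([:: o0], o6, o6, [::]))]);
([:: o6; o0; o6], [:: (1, ([:: o6], o0, o6, [::])); (-1, ([::], o6, o1, [:: o3])); (1, ([:: o0], o3, o3, [::]))]);
([:: o1; o0; o1], [:: (1, ([::], o1, o0, [:: o1])); (-1, ([:: o0], o1, o1, [::]))]);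
([:: o2; o1; o0], [:: (1, ([:: o2], o1, o0, [::])); (-1, ([::], o0, o2, [:: o1])); (1, ([:: o0], o2, o1, [::]))]);
([:: o4; o1; o0], [:: (1, ([:: o4], o1, o0, [::])); (-1, ([:: o4], o4, o5, [::])); (1, ([::], o4, o4, [:: o5]))]);
([:: o2; o1; o4], [:: (1, ([:: o2], o1, o4, [::])); (-1, ([:: o2], o2, o3, [::])); (1, ([::], o2, o2, [:: o3]))]);
([:: o3; o1; o4], [:: (1, ([:: o3], o1, o4, [::])); (1, ([:: o3], o4, o1, [::])); (-1, ([::], o3, o4, [:: o1])); (-1, ([::], o2, o1, [:: o1])); (1, ([:: o2], o1, o1, [::]))]);
([:: o4; o1; o4], [:: (1, ([:: o4], o1, o4, [::])); (-1, ([:: o4], o5, o0, [::])); (1, ([::], o4, o5, [:: o0])); (-1, ([::], o1, o0, [:: o0])); (1, ([:: o1], o0, o0, [::]))]);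
([:: o1; o4; o5], [:: (1, ([::], o1, o4, [:: o5])); (-1, ([:: o0], o5, o5, [::]))]);
([:: o1; o4; o6], [:: (1, ([::], o1, o4, [:: o6])); (-1, ([:: o0], o5, o6, [::]))]);
([:: o6; o0; o5], [:: (1, ([:: o6], o1, o4, [::])); (-1, ([::], o6, o1, [:: o4])); (1, ([:: o0], o3, o4, [::]))]);
([:: o2; o1; o5], [:: (1, ([:: o2], o1, o5, [::])); (-1, ([::], o2, o2, [:: o6]))]);
([:: o1; o5; o3], [:: (1, ([::], o1, o5, [:: o3])); (-1, ([::], o0, o4, [:: o3])); (1, ([:: o0], o4, o3, [::]))]);
([:: o3; o1; o5], [:: (1, ([:: o3], o1, o5, [::])); (-1, ([:: o3], o6, o2, [::])); (1, ([::], o3, o6, [:: o2]))]);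
([:: o1; o5; o4], [:: (1, ([::], o1, o5, [:: o4])); (-1, ([:: o2], o6, o4, [::])); (-1, ([::], o2, o2, [:: o0]))]);
([:: o4; o1; o5], [:: (1, ([:: o4], o1, o5, [::])); (1, ([:: o4], o5, o1, [::])); (-1, ([::], o4, o5, [:: o1])); (1, ([:: o0], o1, o1, [::]))]);
([:: o5; o1; o5], [:: (1, ([:: o5], o1, o5, [::])); (-1, ([::], o5, o2, [:: o6])); (1, ([:: o0], o3, o6, [::])); (-1, ([::], o0, o0, [:: o1]))]);
([:: o1; o6; o3], [:: (1, ([::], o1, o6, [:: o3])); (1, ([:: o0], o3, o3, [::]))]);
([:: o3; o1; o6], [:: (1, ([:: o3], o1, o6, [::])); (1, ([:: o3], o6, o1, [::])); (-1, ([::], o3, o6, [:: o1])); (1, ([:: o0], o1, o1, [::]))]);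
([:: o1; o6; o4], [:: (1, ([::], o1, o6, [:: o4])); (1, ([:: o0], o3, o4, [::]))]);
([:: o4; o1; o6], [:: (1, ([:: o4], o1, o6, [::])); (1, ([:: o4], o5, o2, [::])); (-1, ([::], o4, o5, [:: o2]))]);
([:: o5; o1; o6], [:: (1, ([:: o5], o1, o6, [::])); (1, ([:: o5], o6, o1, [::])); (-1, ([::], o5, o6, [:: o1])); (-1, ([::], o2, o1, [:: o1])); (1, ([:: o2], o1, o1, [::]))]);
([:: o2; o1; o2], [:: (1, ([::], o2, o1, [:: o2])); (-1, ([:: o1], o2, o2, [::]))]);
([:: o3; o2; o1], [:: (1, ([:: o3], o2, o1, [::])); (1, ([:: o3], o3, o4, [::])); (-1, ([::], o3, o3, [:: o4]))]);
([:: o3; o2; o3], [:: (1, ([:: o3], o2, o3, [::])); (1, ([:: o3], o4, o1, [::])); (-1, ([::], o3, o4, [:: o1])); (-1, ([::], o2, o1, [:: o1])); (1, ([:: o2], o1, o1, [::]))]);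
([:: o2; o3; o4], [:: (1, ([::], o2, o3, [:: o4])); (-1, ([:: o0], o5, o4, [::])); (-1, ([::], o0, o0, [:: o1]))]);
([:: o5; o0; o5], [:: (1, ([:: o5], o2, o3, [::])); (-1, ([::], o5, o2, [:: o3])); (1, ([:: o0], o3, o3, [::]))]);
([:: o2; o3; o6], [:: (1, ([::], o2, o3, [:: o6])); (-1, ([:: o0], o5, o6, [::]))]);
([:: o6; o2; o3], [:: (1, ([:: o6], o2, o3, [::])); (-1, ([:: o6], o1, o4, [::])); (1, ([::], o6, o1, [:: o4])); (-1, ([:: o0], o3, o4, [::]))]);
([:: o2; o4; o3], [:: (1, ([::], o2, o4, [:: o3])); (-1, ([:: o1], o3, o3, [::]))]);
([:: o3; o2; o4], [:: (1, ([:: o3], o2, o4, [::])); (1, ([:: o3], o4, o2, [::])); (-1, ([::], o3, o4, [:: o2])); (-1, ([:: o1], o2, o2, [::]))]);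
([:: o2; o4; o5], [:: (1, ([::], o2, o4, [:: o5])); (-1, ([::], o0, o6, [:: o5])); (1, ([:: o0], o6, o5, [::]))]);
([:: o5; o1; o3], [:: (1, ([:: o5], o2, o4, [::])); (-1, ([::], o5, o2, [:: o4])); (1, ([:: o0], o3, o4, [::]))]);
([:: o6; o2; o4], [:: (1, ([:: o6], o2, o4, [::])); (-1, ([::], o6, o1, [:: o3])); (1, ([:: o0], o3, o3, [::]))]);
([:: o3; o2; o5], [:: (1, ([:: o3], o2, o5, [::])); (1, ([:: o3], o6, o1, [::])); (-1, ([::], o3, o6, [:: o1])); (1, ([:: o0], o1, o1, [::]))]);
([:: o2; o5; o4], [:: (1, ([::], o2, o5, [:: o4])); (1, ([:: o0], o3, o4, [::]))]);
([:: o4; o2; o5], [:: (1, ([:: o4], o2, o5, [::])); (1, ([:: o4], o5, o2, [::])); (-1, ([::], o4, o5, [:: o2]))]);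
([:: o2; o5; o6], [:: (1, ([::], o2, o5, [:: o6])); (1, ([:: o0], o3, o6, [::])); (-1, ([::], o0, o0, [:: o1]))]);
([:: o6; o2; o5], [:: (1, ([:: o6], o2, o5, [::])); (1, ([::], o6, o0, [:: o3])); (1, ([:: o1], o3, o3, [::]))]);
([:: o4; o3; o0], [:: (1, ([:: o4], o3, o0, [::])); (-1, ([:: o4], o5, o2, [::])); (1, ([::], o4, o5, [:: o2]))]);
([:: o5; o3; o1], [:: (1, ([:: o5], o3, o1, [::])); (-1, ([:: o5], o2, o4, [::])); (1, ([::], o5, o2, [:: o4])); (-1, ([:: o0], o3, o4, [::]))]);
([:: o5; o3; o2], [:: (1, ([:: o5], o3, o2, [::])); (1, ([:: o5], o2, o3, [::])); (-1, ([::], o5, o2, [:: o3])); (1, ([:: o0], o3, o3, [::]))]);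
([:: o3; o4; o0], [:: (1, ([::], o3, o4, [:: o0])); (1, ([:: o1], o0, o2, [::])); (-1, ([::], o1, o0, [:: o2]))]);
([:: o5; o3; o4], [:: (1, ([:: o5], o3, o4, [::])); (-1, ([:: o5], o5, o6, [::])); (1, ([::], o5, o5, [:: o6]))]);
([:: o3; o5; o1], [:: (1, ([::], o3, o5, [:: o1])); (1, ([::], o0, o2, [:: o1])); (-1, ([:: o0], o2, o1, [::]))]);
([:: o3; o5; o2], [:: (1, ([::], o3, o5, [:: o2])); (1, ([::], o0, o2, [:: o2])); (-1, ([:: o0], o2, o2, [::]))]);
([:: o5; o3; o6], [:: (1, ([:: o5], o3, o6, [::])); (-1, ([::], o5, o0, [:: o1])); (-1, ([::], o4, o1, [:: o1])); (1, ([:: o4], o1, o1, [::]))]);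
([:: o6; o4; o1], [:: (1, ([:: o6], o4, o1, [::])); (1, ([:: o6], o1, o4, [::])); (-1, ([::], o6, o1, [:: o4])); (1, ([:: o0], o3, o4, [::]))]);
([:: o6; o4; o2], [:: (1, ([:: o6], o4, o2, [::])); (1, ([::], o6, o1, [:: o3])); (-1, ([:: o0], o3, o3, [::]))]);
([:: o6; o4; o6], [:: (1, ([:: o6], o4, o6, [::])); (-1, ([::], o6, o2, [:: o0])); (-1, ([::], o4, o0, [:: o0])); (1, ([:: o4], o0, o0, [::]))]);
([:: o5; o0; o6], [:: (1, ([::], o5, o0, [:: o6])); (-1, ([:: o0], o5, o6, [::]))]);
([:: o6; o5; o0], [:: (1, ([:: o6], o5, o0, [::])); (-1, ([:: o6], o1, o4, [::])); (1, ([::], o6, o1, [:: o4])); (-1, ([:: o0], o3, o4, [::]))]);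
([:: o5; o1; o4], [:: (1, ([::], o5, o1, [:: o4])); (1, ([:: o2], o6, o4, [::])); (1, ([::], o2, o2, [:: o0]))]);
([:: o5; o6; o0], [:: (1, ([::], o5, o6, [:: o0])); (1, ([:: o1], o0, o2, [::])); (-1, ([::], o1, o0, [:: o2]))])].

Definition check3 : bool :=
  all (fun p => all (fun t => size t.2.1.1.1 + size t.2.2 == 1)%N p.2 &&
     all (fun a => all (fun b => all (fun c =>
        tgt3 p.1 [:: a; b; c] == combo p.2 [:: a; b; c]) ords) ords) ords) certs.

Definition cover3 : bool :=
  all (fun a => all (fun b => all (fun c =>
     has (fun p => p.1 == [:: a; b; c]) certs) ords) ords) ords.

Definition checkpsi : bool :=
  all (fun a => all (fun b => all (fun i =>
    \sum_(m <- ords) \sum_(n <- ords) epsT m n i * rhoZ a b [:: m; n] == 0) ords) ords) ords.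

Lemma check3_ok : check3.
Proof. rewrite /check3 /combo /tgt3 /gZ /rhoZ unlock; vm_compute; reflexivity. Qed.

Lemma cover3_ok : cover3.
Proof. by vm_compute. Qed.

Lemma checkpsi_ok : checkpsi.
Proof. rewrite /checkpsi /rhoZ unlock; vm_compute; reflexivity. Qed.

Lemma sum_ords (R : nmodType) (F : 'I_7 -> R) : \sum_(i < 7) F i = \sum_(i <- ords) F i.
Proof.
apply: perm_big; apply: uniq_perm; first exact: index_enum_uniq.
  by vm_compute.
by move=> i; rewrite mem_index_enum mem_ords.
Qed.



Section Tens.
Context {k : fieldType}.
Implicit Types (x y z : tens k) (u v w : word).

Lemma tmul_nil x y : tmul x y [::] = x [::] * y [::].
Proof. by rewrite /tmul big_ord_recl big_ord0 addr0. Qed.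

Lemma tmul_cons x y a w :
  tmul x y (a :: w) = x [::] * y (a :: w) + tmul (fun w' => x (a :: w')) y w.
Proof.
by rewrite /tmul big_ord_recl /=.
Qed.

Lemma tmul_linl c x y z w :
  tmul (fun w => c * x w + y w) z w = c * tmul x z w + tmul y z w.
Proof.
rewrite /tmul mulr_sumr -big_split /=; apply: eq_bigr => i _; ring.
Qed.

Lemma tmul_linr c x y z w :
  tmul z (fun w => c * x w + y w) w = c * tmul z x w + tmul z y w.
Proof.
rewrite /tmul mulr_sumr -big_split /=; apply: eq_bigr => i _; ring.
Qed.

Lemma tmul0l y w : tmul (fun _ => 0) y w = 0.
Proof. by rewrite /tmul big1 // => i _; rewrite mul0r. Qed.

Lemma tmul0r y w : tmul y (fun _ => 0) w = 0.
Proof. by rewrite /tmul big1 // => i _; rewrite mulr0. Qed.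

Lemma tmul_assoc x y z : tmul (tmul x y) z = tmul x (tmul y z).
Proof.
apply: functional_extensionality => w.
elim: w x y => [|a w IH] x y.
  by rewrite !tmul_nil mulrA.
rewrite tmul_cons tmul_nil.
have -> : (fun w' => tmul x y (a :: w')) =
          (fun w' => x [::] * (fun w'' => y (a :: w'')) w' + tmul (fun w'' => x (a :: w'')) y w').
  by apply: functional_extensionality => w'; rewrite tmul_cons.
rewrite tmul_linl IH [in RHS]tmul_cons [tmul y z (a :: w)]tmul_cons.
ring.
Qed.

Lemma tword_nil_l x : tmul (tword k [::]) x = x.
Proof.
apply: functional_extensionality => w; case: w => [|a w].
  by rewrite tmul_nil /tword eqxx mul1r.
rewrite tmul_cons /tword /= mul1r.
have -> : (fun w' : word => ((a :: w' == [::]) : nat)%:R) = (fun _ => 0 : k) by [].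
by rewrite tmul0l addr0.
Qed.

Lemma tmul_twordl u x w :
  tmul (tword k u) x w = if take (size u) w == u then x (drop (size u) w) else 0.
Proof.
elim: u w x => [|b u IH] w x.
  by rewrite tword_nil_l take0 drop0 eqxx.
case: w => [|a w].
  by rewrite tmul_nil /tword /= mul0r.
rewrite tmul_cons /tword /= mul0r add0r.
case: (eqVneq a b) => [->|ab].
  have -> : (fun w' : word => ((b :: w' == b :: u) : nat)%:R) = tword k u.
    by apply: functional_extensionality => w'; rewrite /tword eqseq_cons eqxx.
  by rewrite IH eqseq_cons eqxx.
have -> : (fun w' : word => ((a :: w' == b :: u) : nat)%:R) = (fun _ => 0 : k).
  by apply: functional_extensionality => w'; rewrite eqseq_cons (negbTE ab).
by rewrite tmul0l eqseq_cons (negbTE ab).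
Qed.

Lemma tword_cat u v : tmul (tword k u) (tword k v) = tword k (u ++ v).
Proof.
apply: functional_extensionality => w; rewrite tmul_twordl /tword.
have [le|lt] := leqP (size u) (size w).
  rewrite -{3}(cat_take_drop (size u) w) eqseq_cat ?size_take_min ?(minn_idPl le) //.
  by case: (take _ _ == u).
rewrite take_oversize ?(ltnW lt) //.
have -> : (w == u) = false by apply/eqP => E; move: lt; rewrite E ltnn.
have -> : (w == u ++ v) = false.
  by apply/eqP => E; move: lt; rewrite E size_cat ltnNge leq_addr.
by [].
Qed.


Lemma tmul_twordr v x w :
  tmul x (tword k v) w =
  if (size v <= size w)%N && (drop (size w - size v) w == v)
  then x (take (size w - size v) w) else 0.
Proof.
elim: w x => [|a w IH] x.
  rewrite tmul_nil /tword; case: v => [|b v] /=; first by rewrite mulr1.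
  by rewrite mulr0.
rewrite tmul_cons IH /tword.
have [le|lt] := leqP (size v) (size w).
  have -> : (a :: w == v) = false.
    by apply/eqP => E; move: le; rewrite -E /= ltnn.
  rewrite mulr0 add0r /= (leq_trans le (leqnSn _)) /=.
  by rewrite subSn.
have -> : ((size w).+1 - size v)%N = 0%N by apply/eqP; rewrite subn_eq0.
rewrite /= ?drop0 ?take0 addr0.
case: (eqVneq (a :: w) v) => [<-|ne] /=; first by rewrite leqnn mulr1.
by rewrite mulr0 andbF.
Qed.

Lemma size_take_eq u w : take (size u) w == u -> (size u <= size w)%N.
Proof.
move/eqP=> E; have := congr1 size E; rewrite size_take_min => <-.
exact: geq_minr.
Qed.

Lemma gen_val u rho v w : homog 2 rho ->
  tmul (tmul (tword k u) rho) (tword k v) w =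
  if (size w == size u + 2 + size v)%N && (take (size u) w == u) && (drop (size u + 2) w == v)
  then rho (take 2 (drop (size u) w)) else 0.
Proof.
move=> hr; rewrite tmul_assoc tmul_twordl.
case T: (take (size u) w == u); last by rewrite andbF.
have hu := @size_take_eq u w T.
rewrite tmul_twordr size_drop andbT.
case: (eqVneq (size w) (size u + 2 + size v)%N) => [E|NE] /=.
  rewrite E (_ : (size u + 2 + size v - size u - size v = 2)%N); last by lia.
  rewrite (_ : (size v <= size u + 2 + size v - size u)%N); last by apply/leP; lia.
  by rewrite drop_drop addnC.
case: ifP => // /andP [hv _]; apply: hr.
rewrite size_take_min size_drop; apply/eqP => E2.
move: NE E2 hu hv; rewrite /minn; case: ifP; lia.
Qed.


Lemma eps_T i j l : eps k i j l = (epsT i j l)%:~R.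
Proof.
rewrite epsT_Z /eps /epsZ; case: ifP => _; first by rewrite mulr1z.
by case: ifP => _; rewrite ?mulrNz ?mulr1z ?mulr0z.
Qed.

Lemma eps_cyc i j l : eps k i j l = eps k j l i.
Proof. by rewrite !eps_T epsT_cyc. Qed.

Lemma eps_pq i j : eps k (ppf i) (qqf i) j = (i == j)%:R.
Proof. by rewrite eps_T epsT_pq; case: (i == j). Qed.

Lemma eps_diag i j : eps k i i j = 0.
Proof. by rewrite eps_T epsT_diag. Qed.

Lemma eps_w0 : eps k o0 o1 o2 = 1.
Proof. by rewrite eps_T epsT_w0. Qed.

Lemma sum_delta (i0 : 'I_7) (F : 'I_7 -> k) : \sum_(i < 7) (i == i0)%:R * F i = F i0.
Proof.
rewrite (bigD1 i0) //= eqxx mul1r big1 ?addr0 // => i /negbTE ->.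
by rewrite mul0r.
Qed.

Lemma sum_delta' (i0 : 'I_7) (F : 'I_7 -> k) : \sum_(i < 7) (i0 == i)%:R * F i = F i0.
Proof. by rewrite -(sum_delta i0); apply: eq_bigr => i _; rewrite eq_sym. Qed.

Lemma sum2_delta (a b : 'I_7) (F : 'I_7 -> 'I_7 -> k) :
  \sum_(m < 7) \sum_(n < 7) ([:: m; n] == [:: a; b])%:R * F m n = F a b.
Proof.
rewrite (bigD1 a) //= [X in _ + X]big1 => [|m /negbTE ma]; last first.
  by rewrite big1 // => n _; rewrite eqseq_cons ma mul0r.
rewrite addr0 (bigD1 b) //= [X in _ + X]big1 => [|n /negbTE nb]; last first.
  by rewrite !eqseq_cons eqxx nb mul0r.
by rewrite !eqseq_cons !eqxx mul1r addr0.
Qed.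

Lemma sum3_delta (a b c : 'I_7) (F : 'I_7 -> 'I_7 -> 'I_7 -> k) :
  \sum_(m < 7) \sum_(n < 7) \sum_(p < 7) ([:: m; n; p] == [:: a; b; c])%:R * F m n p
  = F a b c.
Proof.
rewrite (bigD1 a) //= [X in _ + X]big1 => [|m /negbTE ma]; last first.
  by rewrite big1 // => n _; rewrite big1 // => p _; rewrite eqseq_cons ma mul0r.
rewrite addr0; under eq_bigr do under eq_bigr do rewrite eqseq_cons eqxx /=.
exact: (sum2_delta b c (F a)).
Qed.

Definition psi2 (x : tens k) (i : 'I_7) : k :=
  \sum_(m < 7) \sum_(n < 7) eps k m n i * x [:: m; n].
Definition eps3 (x : tens k) : k :=
  \sum_(a < 7) \sum_(b < 7) \sum_(c < 7) eps k a b c * x [:: a; b; c].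

Lemma psi2_lin c x y i : psi2 (fun w => c * x w + y w) i = c * psi2 x i + psi2 y i.
Proof.
rewrite /psi2 mulr_sumr -big_split; apply: eq_bigr => m _.
rewrite mulr_sumr -big_split; apply: eq_bigr => n _ /=; ring.
Qed.

Lemma eps3_lin c x y : eps3 (fun w => c * x w + y w) = c * eps3 x + eps3 y.
Proof.
rewrite /eps3 mulr_sumr -big_split; apply: eq_bigr => a _.
rewrite mulr_sumr -big_split; apply: eq_bigr => b _.
rewrite mulr_sumr -big_split; apply: eq_bigr => d _ /=; ring.
Qed.

Lemma psi2_big (m : nat) (c : 'I_m -> k) (g : 'I_m -> tens k) i :
  psi2 (fun w => \sum_(j < m) c j * g j w) i = \sum_(j < m) c j * psi2 (g j) i.
Proof.
rewrite /psi2.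
under eq_bigr do under eq_bigr do rewrite mulr_sumr.
under eq_bigr do rewrite exchange_big.
rewrite exchange_big; apply: eq_bigr => j _; rewrite mulr_sumr.
apply: eq_bigr => a _; rewrite mulr_sumr; apply: eq_bigr => b _; ring.
Qed.

Lemma eps3_big (m : nat) (c : 'I_m -> k) (g : 'I_m -> tens k) :
  eps3 (fun w => \sum_(j < m) c j * g j w) = \sum_(j < m) c j * eps3 (g j).
Proof.
rewrite /eps3.
under eq_bigr do under eq_bigr do under eq_bigr do rewrite mulr_sumr.
under eq_bigr do under eq_bigr do rewrite exchange_big.
under eq_bigr do rewrite exchange_big.
rewrite exchange_big; apply: eq_bigr => j _; rewrite mulr_sumr.
apply: eq_bigr => a _; rewrite mulr_sumr; apply: eq_bigr => b _.
rewrite mulr_sumr; apply: eq_bigr => d _; ring.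
Qed.

Lemma psi2_ext x y i : (forall m n, x [:: m; n] = y [:: m; n]) -> psi2 x i = psi2 y i.
Proof. by move=> H; apply: eq_bigr => m _; apply: eq_bigr => n _; rewrite H. Qed.

Lemma eps3_ext x y : (forall a b c, x [:: a; b; c] = y [:: a; b; c]) -> eps3 x = eps3 y.
Proof.
by move=> H; apply: eq_bigr => a _; apply: eq_bigr => b _; apply: eq_bigr => c _; rewrite H.
Qed.

Lemma pair2_psi2 rho c :
  pair2 rho (fun m n => \sum_(i < 7) c i * rel_r k i m n) = \sum_(i < 7) c i * psi2 rho i.
Proof.
rewrite /pair2 /rel_r /psi2.
under eq_bigr do under eq_bigr do rewrite mulr_sumr.
under eq_bigr do rewrite exchange_big.
rewrite exchange_big; apply: eq_bigr => j _; rewrite mulr_sumr.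
apply: eq_bigr => a _; rewrite mulr_sumr; apply: eq_bigr => b _.
rewrite eps_cyc; ring.
Qed.

Lemma Rperp_psi2 rho : Rperp rho <-> homog 2 rho /\ (forall i, psi2 rho i = 0).
Proof.
split.
  move=> [h P]; split => // i.
  by have := P (fun j => (j == i)%:R); rewrite pair2_psi2 sum_delta.
move=> [h P]; split => // c.
by rewrite pair2_psi2 big1 // => i _; rewrite P mulr0.
Qed.


Notation span := (@in_span_Igen k).

Lemma span0 : span (fun _ => 0).
Proof.
exists 0%N, (fun _ => 0), (fun _ => fun _ => 0); split; first by case.
by move=> w; rewrite big_ord0.
Qed.

Lemma span_ext x y : span x -> (forall w, x w = y w) -> span y.
Proof.
by move=> [m [c [g [G E]]]] H; exists m, c, g; split => // w; rewrite -H.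
Qed.

Arguments span_ext {x y}.

Lemma spanD c x y : span x -> span y -> span (fun w => c * x w + y w).
Proof.
move=> [m1 [c1 [g1 [G1 E1]]]] [m2 [c2 [g2 [G2 E2]]]].
exists (m1 + m2)%N,
  (fun i => match split i with inl j => c * c1 j | inr j => c2 j end),
  (fun i => match split i with inl j => g1 j | inr j => g2 j end).
split; first by move=> i; case: (split i) => j; [apply: G1 | apply: G2].
move=> w; rewrite big_split_ord E1 E2 mulr_sumr; congr (_ + _).
  apply: eq_bigr => j _; have := @unsplitK m1 m2 (inl j); rewrite /= => ->.
  by rewrite mulrA.
by apply: eq_bigr => j _; have := @unsplitK m1 m2 (inr j); rewrite /= => ->.
Qed.

Arguments spanD c {x y}.

Lemma span_gen (g : tens k) : Igen g -> span g.
Proof.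
move=> G; exists 1%N, (fun _ => 1), (fun _ => g); split => // w.
by rewrite big_ord1 mul1r.
Qed.

Lemma span_sumL (I : Type) (s : seq I) (c : I -> k) (g : I -> tens k) :
  (forall i, span (g i)) -> span (fun w => \sum_(i <- s) c i * g i w).
Proof.
elim: s => [|i s IH] H.
  by apply: span_ext span0 _ => w; rewrite big_nil.
by apply: span_ext (spanD (c i) (H i) (IH H)) _ => w; rewrite big_cons.
Qed.

Lemma tmul_sumr z (m : nat) (c : 'I_m -> k) (g : 'I_m -> tens k) w :
  tmul z (fun w => \sum_(j < m) c j * g j w) w = \sum_(j < m) c j * tmul z (g j) w.
Proof.
rewrite /tmul; under eq_bigr do rewrite mulr_sumr.
rewrite exchange_big; apply: eq_bigr => j _; rewrite mulr_sumr.
by apply: eq_bigr => i _; ring.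
Qed.

Lemma tmul_suml z (m : nat) (c : 'I_m -> k) (g : 'I_m -> tens k) w :
  tmul (fun w => \sum_(j < m) c j * g j w) z w = \sum_(j < m) c j * tmul (g j) z w.
Proof.
rewrite /tmul; under eq_bigr do rewrite mulr_suml.
rewrite exchange_big; apply: eq_bigr => j _; rewrite mulr_sumr.
by apply: eq_bigr => i _; ring.
Qed.

Lemma span_mull u x : span x -> span (tmul (tword k u) x).
Proof.
move=> [m [c [g [G E]]]]; exists m, c, (fun i => tmul (tword k u) (g i)); split.
  move=> i; case: (G i) => [u' [v' [rho [R ->]]]]; exists (u ++ u'), v', rho.
  by split => //; rewrite -tword_cat !tmul_assoc.
move=> w; have -> : x = (fun w => \sum_(i < m) c i * g i w).
  by apply: functional_extensionality.
by rewrite tmul_sumr.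
Qed.

Lemma span_mulr v x : span x -> span (tmul x (tword k v)).
Proof.
move=> [m [c [g [G E]]]]; exists m, c, (fun i => tmul (g i) (tword k v)); split.
  move=> i; case: (G i) => [u' [v' [rho [R ->]]]]; exists u', (v' ++ v), rho.
  by split => //; rewrite -tword_cat !tmul_assoc.
move=> w; have -> : x = (fun w => \sum_(i < m) c i * g i w).
  by apply: functional_extensionality.
by rewrite tmul_suml.
Qed.

Lemma hcomp_homog n x : homog n x -> hcomp n x = x.
Proof.
move=> h; apply: functional_extensionality => w; rewrite /hcomp.
by case: eqP => // /eqP /h ->.
Qed.

Lemma hcomp_other n m x : homog n x -> m != n -> hcomp m x = (fun _ => 0).
Proof.
move=> h mn; apply: functional_extensionality => w; rewrite /hcomp.
case: eqP => // E; apply: h; by rewrite E.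
Qed.

Lemma homog_hcomp n x : homog n (hcomp n x).
Proof. by move=> w /negbTE; rewrite /hcomp => ->. Qed.

Lemma Igen_val (g : tens k) : Igen g -> exists u v (rho : tens k), Rperp rho /\ forall w, g w =
  if (size w == size u + 2 + size v)%N && (take (size u) w == u) && (drop (size u + 2) w == v)
  then rho (take 2 (drop (size u) w)) else 0.
Proof.
move=> [u [v [rho [R ->]]]]; exists u, v, rho; split => // w.
by apply: gen_val; case: R.
Qed.

Lemma gen_low (g : tens k) w : Igen g -> (size w < 2)%N -> g w = 0.
Proof.
move=> /Igen_val [u [v [rho [_ ->]]]] sw.
rewrite (_ : (size w == _)%N = false) //; apply/negbTE/eqP; lia.
Qed.

Lemma gen_psi2 (g : tens k) i : Igen g -> psi2 g i = 0.
Proof.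
move=> /Igen_val [u [v [rho [R E]]]].
case: (Rperp_psi2 rho) => [/(_ R) [_ P] _].
case: u E => [|a u]; case: v => [|b v] E.
- rewrite -(P i); apply: psi2_ext => m n; by rewrite E.
all: rewrite /psi2 big1 // => m _; rewrite big1 // => n _; rewrite E /=.
all: rewrite ?mulr0 //.
all: rewrite ifF ?mulr0 //; apply/negbTE; rewrite !negb_and; apply/orP; left; apply/orP; left; apply/eqP; lia.
Qed.


Lemma eps3_psi2_l rho a' :
  \sum_(a < 7) \sum_(b < 7) \sum_(c < 7) eps k a b c * ((a == a')%:R * rho [:: b; c])
  = psi2 rho a'.
Proof.
transitivity (\sum_(a < 7) (a == a')%:R * (\sum_(b < 7) \sum_(c < 7) eps k a b c * rho [:: b; c])).
  apply: eq_bigr => a _; rewrite mulr_sumr; apply: eq_bigr => b _; rewrite mulr_sumr.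
  by apply: eq_bigr => c _; ring.
rewrite sum_delta /psi2; apply: eq_bigr => b _; apply: eq_bigr => c _; by rewrite eps_cyc.
Qed.

Lemma eps3_psi2_r rho c' :
  \sum_(a < 7) \sum_(b < 7) \sum_(c < 7) eps k a b c * ((c == c')%:R * rho [:: a; b])
  = psi2 rho c'.
Proof.
rewrite /psi2; apply: eq_bigr => a _; apply: eq_bigr => b _.
rewrite -(sum_delta c' (fun c => eps k a b c * rho [:: a; b])).
by apply: eq_bigr => c _; rewrite /=; ring.
Qed.

Lemma gen_eps3 (g : tens k) : Igen g -> eps3 g = 0.
Proof.
move=> /Igen_val [u [v [rho [R E]]]].
case: (Rperp_psi2 rho) => [/(_ R) [_ P] _].
case: u E => [|a u]; case: v => [|b v] E.
- rewrite /eps3 big1 // => a _; rewrite big1 // => b _; rewrite big1 // => c _.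
  by rewrite E /= mulr0.
- case: v E => [|d v] E.
    rewrite -(P b) -(eps3_psi2_r rho b) /eps3; apply: eq_bigr => a _.
    apply: eq_bigr => a0 _; apply: eq_bigr => c _; rewrite E /= eqseq_cons andbT.
    by case: (c == b); rewrite ?mul1r ?mul0r.
  rewrite /eps3 big1 // => a _; rewrite big1 // => b0 _; rewrite big1 // => c _.
  by rewrite E /= mulr0.
- case: u E => [|d u] E.
    rewrite -(P a) -(eps3_psi2_l rho a) /eps3; apply: eq_bigr => a0 _.
    apply: eq_bigr => b _; apply: eq_bigr => c _; rewrite E /= eqseq_cons andbT.
    by case: (a0 == a); rewrite ?mul1r ?mul0r.
  rewrite /eps3 big1 // => a0 _; rewrite big1 // => b0 _; rewrite big1 // => c _.
  rewrite E /= ifF ?mulr0 //; apply/negbTE; rewrite !negb_and; apply/orP; left.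
  apply/orP; left; apply/eqP; lia.
- rewrite /eps3 big1 // => a0 _; rewrite big1 // => b0 _; rewrite big1 // => c _.
  rewrite E /= ifF ?mulr0 //; apply/negbTE; rewrite !negb_and; apply/orP; left.
  apply/orP; left; apply/eqP; lia.
Qed.

Lemma span_psi2 x i : span x -> psi2 x i = 0.
Proof.
move=> [m [c [g [G E]]]].
have -> : x = (fun w => \sum_(j < m) c j * g j w) by apply: functional_extensionality.
by rewrite psi2_big big1 // => j _; rewrite gen_psi2 ?mulr0.
Qed.

Lemma span_eps3 x : span x -> eps3 x = 0.
Proof.
move=> [m [c [g [G E]]]].
have -> : x = (fun w => \sum_(j < m) c j * g j w) by apply: functional_extensionality.
by rewrite eps3_big big1 // => j _; rewrite gen_eps3 ?mulr0.
Qed.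

Lemma span_low x w : span x -> (size w < 2)%N -> x w = 0.
Proof.
move=> [m [c [g [G E]]]] sw; rewrite E big1 // => j _.
by rewrite gen_low ?mulr0.
Qed.

Lemma inI_psi2 x i : inI x -> psi2 x i = 0.
Proof.
move=> H; rewrite -(span_psi2 (hcomp 2 x) i (H 2%N)); apply: psi2_ext => m n.
by rewrite /hcomp.
Qed.

Lemma inI_eps3 x : inI x -> eps3 x = 0.
Proof.
move=> H; rewrite -(span_eps3 (hcomp 3 x) (H 3%N)); apply: eps3_ext => a b c.
by rewrite /hcomp.
Qed.

Lemma inI_nil x : inI x -> x [::] = 0.
Proof. by move=> H; have := span_low (hcomp 0 x) [::] (H 0%N) isT; rewrite /hcomp. Qed.

Lemma inI_one x a : inI x -> x [:: a] = 0.
Proof. by move=> H; have := span_low (hcomp 1 x) [:: a] (H 1%N) isT; rewrite /hcomp. Qed.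


Lemma intr_sum (I : Type) (s : seq I) (F : I -> int) :
  (\sum_(i <- s) F i)%:~R = \sum_(i <- s) (F i)%:~R :> k.
Proof.
elim: s => [|i s IH]; first by rewrite !big_nil.
by rewrite !big_cons intrD IH.
Qed.

Lemma intr_b (b : bool) : ((b%:R : int))%:~R = b%:R :> k.
Proof. by case: b. Qed.

Definition rhoK a b : tens k := fun w => (rhoZ a b w)%:~R.

Lemma rhoK_homog a b : homog 2 (rhoK a b).
Proof.
move=> w sw; have F : forall c d, (w == [:: c; d]) = false.
  by move=> c d; apply/eqP => E; move: sw; rewrite E.
rewrite /rhoK /rhoZ F big1 ?subr0 // => j _; by rewrite F mulr0.
Qed.

Lemma psi2_rhoK a b i : psi2 (rhoK a b) i = 0.
Proof.
rewrite /psi2 /rhoK.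
under eq_bigr do under eq_bigr do rewrite eps_T -intrM.
under eq_bigr do rewrite -intr_sum.
rewrite -intr_sum sum_ords; under eq_bigr do rewrite sum_ords.
have := checkpsi_ok; rewrite /checkpsi => /ords_all3 /(_ a b i) /eqP ->.
by [].
Qed.

Lemma Rperp_rhoK a b : Rperp (rhoK a b).
Proof. apply/Rperp_psi2; split; [exact: rhoK_homog | exact: psi2_rhoK]. Qed.

Definition genK (t : word * 'I_7 * 'I_7 * word) : tens k :=
  let: (u, a, b, v) := t in tmul (tmul (tword k u) (rhoK a b)) (tword k v).

Lemma Igen_genK t : Igen (genK t).
Proof.
case: t => [[[u a] b] v]; exists u, v, (rhoK a b); split => //; exact: Rperp_rhoK.
Qed.

Lemma genK_val t w : genK t w = (gZ t w)%:~R.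
Proof.
case: t => [[[u a] b] v]; rewrite /genK gen_val; last exact: rhoK_homog.
by rewrite /gZ; case: ifP.
Qed.

Lemma tword_Z u w : tword k u w = (twordZ u w)%:~R.
Proof. by rewrite /tword /twordZ intr_b. Qed.

End Tens.
Arguments span_ext {k x y}.
Arguments spanD {k} c {x y}.

Section Tens.
Context {k : fieldType}.
Implicit Types (x y z : tens k) (u v w : word).
Notation span := (@in_span_Igen k).
Lemma H3basic a b c :
  span (fun w => tword k [:: a; b; c] w - eps k a b c * tword k w0 w).
Proof.
have : has (fun p => p.1 == [:: a; b; c]) certs.
  by have := cover3_ok; rewrite /cover3 => /ords_all3 /(_ a b c).
move=> /hasP [p pin /eqP pE].
have /andP [/allP hsz hval] := allP check3_ok p pin.
set d : term := (0, ([::], o0, o0, [::])).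
exists (size p.2), (fun i => ((nth d p.2 i).1)%:~R), (fun i => genK (nth d p.2 i).2).
split; first by move=> i; apply: Igen_genK.
move=> w.
transitivity ((tgt3 p.1 w)%:~R : k).
  by rewrite pE /tgt3 intrB intrM -!tword_Z -eps_T.
transitivity ((combo p.2 w)%:~R : k); last first.
  rewrite /combo intr_sum (big_nth d) big_mkord; apply: eq_bigr => i _.
  by rewrite intrM genK_val.
congr (_%:~R).
have [sw|sw] := eqVneq (size w) 3%N.
  case: w sw => [|x [|y [|z [|? ?]]]] // _.
  by move/ords_all3: hval => /(_ x y z) /eqP.
rewrite pE /tgt3 /combo big1_seq.
  have F : forall u, size u = 3%N -> (w == u) = false.
    by move=> u su; apply/eqP => E; move: sw; rewrite E su.
  by rewrite /twordZ !F // mulr0 subr0.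
move=> t /andP [_ tin]; have := hsz t tin.
case: t tin => c0 [[[u a0] b0] v] tin /= huv.
rewrite ifF ?mulr0 //; apply/negbTE; rewrite !negb_and; apply/orP; left.
apply/orP; left; apply/eqP => E; move: sw huv; rewrite E; lia.
Qed.

Lemma tword_size u w : size w != size u -> tword k u w = 0.
Proof. by move=> sw; rewrite /tword (_ : (w == u) = false) //; apply/eqP => E; move: sw; rewrite E eqxx. Qed.

Lemma tword_nil_r x : tmul x (tword k [::]) = x.
Proof.
apply: functional_extensionality => w; rewrite tmul_twordr /= subn0 drop_size take_size //.
Qed.

Lemma psi2_tword a b i : psi2 (tword k [:: a; b]) i = eps k a b i.
Proof.
rewrite -(sum2_delta a b (fun m n => eps k m n i)) /psi2.
by apply: eq_bigr => m _; apply: eq_bigr => n _; rewrite mulrC.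
Qed.

Lemma eps3_tword a b c : eps3 (tword k [:: a; b; c]) = eps k a b c.
Proof.
rewrite -(sum3_delta a b c (fun m n p => eps k m n p)) /eps3.
by apply: eq_bigr => m _; apply: eq_bigr => n _; apply: eq_bigr => p _; rewrite mulrC.
Qed.

Lemma span_sumL1 (I : Type) (s : seq I) (g : I -> tens k) :
  (forall i, span (g i)) -> span (fun w => \sum_(i <- s) g i w).
Proof.
move=> H; apply: span_ext (span_sumL _ s (fun _ => 1) _ H) _ => w.
by apply: eq_bigr => i _; rewrite mul1r.
Qed.

Lemma decomp3 x : homog 3 x -> forall w,
  x w = \sum_(a < 7) \sum_(b < 7) \sum_(c < 7) x [:: a; b; c] * tword k [:: a; b; c] w.
Proof.
move=> h w; have [sw|sw] := eqVneq (size w) 3%N.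
  case: w sw => [|p [|q [|r [|? ?]]]] // _.
  rewrite -(sum3_delta p q r (fun a b c => x [:: a; b; c])).
  apply: eq_bigr => a _; apply: eq_bigr => b _; apply: eq_bigr => c _.
  by rewrite /tword eq_sym mulrC.
rewrite h // big1 // => a _; rewrite big1 // => b _; rewrite big1 // => c _.
by rewrite tword_size ?mulr0.
Qed.

Lemma H3span x : homog 3 x -> eps3 x = 0 -> span x.
Proof.
move=> h e.
apply: span_ext (span_sumL1 _ (index_enum _) (fun a => fun w =>
   \sum_(b < 7) \sum_(c < 7) x [:: a; b; c] *
     (tword k [:: a; b; c] w - eps k a b c * tword k w0 w)) _) _.
  move=> a; apply: span_sumL1 => b; apply: span_sumL => c; exact: H3basic.
move=> w /=.
under eq_bigr do under eq_bigr do under eq_bigr do rewrite mulrBr.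
under eq_bigr do under eq_bigr do rewrite sumrB.
under eq_bigr do rewrite sumrB.
rewrite sumrB -decomp3 //.
have -> : \sum_(a < 7) \sum_(b < 7) \sum_(c < 7) x [:: a; b; c] * (eps k a b c * tword k w0 w)
   = eps3 x * tword k w0 w.
  rewrite /eps3 mulr_suml; apply: eq_bigr => a _; rewrite mulr_suml.
  apply: eq_bigr => b _; rewrite mulr_suml; apply: eq_bigr => c _; ring.
by rewrite e mul0r subr0.
Qed.

Lemma Rperp_tword00 : Rperp (tword k [:: o0; o0]).
Proof.
apply/Rperp_psi2; split.
  by move=> w sw; apply: tword_size.
by move=> i; rewrite psi2_tword eps_diag.
Qed.

Lemma tword_split3 a b c :
  tword k [:: a; b; c] = (fun w => eps k a b c * tword k w0 w +
     (tword k [:: a; b; c] w - eps k a b c * tword k w0 w)).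
Proof. by apply: functional_extensionality => w; ring. Qed.

Lemma tword_span4 t : (4 <= size t)%N -> span (tword k t).
Proof.
case: t => [|a [|b [|c [|d r]]]] // _.
have -> : tword k [:: a, b, c, d & r] = tmul (tword k [:: a; b; c]) (tword k (d :: r)).
  by rewrite tword_cat.
have E1 : forall y, tmul (tword k [:: a; b; c]) y = (fun w =>
    eps k a b c * tmul (tword k w0) y w +
    tmul (fun w => tword k [:: a; b; c] w - eps k a b c * tword k w0 w) y w).
  move=> y; apply: functional_extensionality => w.
  by rewrite {1}tword_split3 tmul_linl.
rewrite E1; apply: spanD; last by apply: span_mulr; apply: H3basic.
rewrite tword_cat /=.
have -> : tword k [:: o0, o1, o2, d & r] =
   tmul (tword k [:: o0]) (tmul (tword k [:: o1; o2; d]) (tword k r)).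
  by rewrite !tword_cat.
have E2 : forall y, tmul (tword k [:: o1; o2; d]) y = (fun w =>
    eps k o1 o2 d * tmul (tword k w0) y w +
    tmul (fun w => tword k [:: o1; o2; d] w - eps k o1 o2 d * tword k w0 w) y w).
  move=> y; apply: functional_extensionality => w.
  by rewrite {1}tword_split3 tmul_linl.
rewrite E2.
have -> : tmul (tword k [:: o0]) (fun w =>
    eps k o1 o2 d * tmul (tword k w0) (tword k r) w +
    tmul (fun w => tword k [:: o1; o2; d] w - eps k o1 o2 d * tword k w0 w) (tword k r) w)
  = (fun w => eps k o1 o2 d * tmul (tword k [:: o0]) (tmul (tword k w0) (tword k r)) w +
     tmul (tword k [:: o0]) (tmul (fun w => tword k [:: o1; o2; d] w - eps k o1 o2 d * tword k w0 w) (tword k r)) w).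
  by apply: functional_extensionality => w; rewrite tmul_linr.
apply: spanD; last by apply: span_mull; apply: span_mulr; apply: H3basic.
apply: span_gen; exists [::], ([:: o1; o2] ++ r), (tword k [:: o0; o0]); split.
  exact: Rperp_tword00.
by rewrite tword_nil_l !tword_cat.
Qed.

Lemma H4span n x : (4 <= n)%N -> homog n x -> span x.
Proof.
move=> hn h.
apply: span_ext (span_sumL _ (index_enum (n.-tuple 'I_7)) (fun t => x t) (fun t => tword k t) _) _.
  by move=> t; apply: tword_span4; rewrite size_tuple.
move=> w /=; have [sw|sw] := eqVneq (size w) n.
  pose t0 : n.-tuple 'I_7 := Tuple (introT eqP sw).
  rewrite (bigD1 t0) //= /tword eqxx mulr1 big1 ?addr0 // => t tne.
  rewrite (_ : (w == t) = false) ?mulr0 //; apply/eqP => E; move: tne.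
  by rewrite (_ : t = t0) ?eqxx //; apply: val_inj; rewrite /= -E.
rewrite h // big1 // => t _; rewrite tword_size ?mulr0 //.
by rewrite size_tuple.
Qed.

End Tens.

Section Main.
Context {k : fieldType}.
Implicit Types (x y z : tens k) (u v w : word).
Notation span := (@in_span_Igen k).

Lemma tmul2 x y a b :
  tmul x y [:: a; b] = x [::] * y [:: a; b] + x [:: a] * y [:: b] + x [:: a; b] * y [::].
Proof. by rewrite /tmul !big_ord_recl big_ord0 /= addr0 !addrA. Qed.

Lemma tmul3 x y a b c :
  tmul x y [:: a; b; c] = x [::] * y [:: a; b; c] + x [:: a] * y [:: b; c]
    + x [:: a; b] * y [:: c] + x [:: a; b; c] * y [::].
Proof. by rewrite /tmul !big_ord_recl big_ord0 /= addr0 !addrA. Qed.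

Lemma sum3_split (F1 F2 F3 F4 : 'I_7 -> 'I_7 -> 'I_7 -> k) :
  \sum_(a < 7) \sum_(b < 7) \sum_(c < 7) (F1 a b c + F2 a b c + F3 a b c + F4 a b c) =
  \sum_(a < 7) \sum_(b < 7) \sum_(c < 7) F1 a b c + \sum_(a < 7) \sum_(b < 7) \sum_(c < 7) F2 a b c
  + \sum_(a < 7) \sum_(b < 7) \sum_(c < 7) F3 a b c + \sum_(a < 7) \sum_(b < 7) \sum_(c < 7) F4 a b c.
Proof.
rewrite -!big_split; apply: eq_bigr => a _; rewrite -!big_split.
by apply: eq_bigr => b _; rewrite -!big_split.
Qed.

Lemma eps3_tmul x y : eps3 (tmul x y) = x [::] * eps3 y + \sum_(a < 7) x [:: a] * psi2 y a
  + \sum_(c < 7) psi2 x c * y [:: c] + eps3 x * y [::].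
Proof.
transitivity (\sum_(a < 7) \sum_(b < 7) \sum_(c < 7)
  (eps k a b c * (x [::] * y [:: a; b; c]) + eps k a b c * (x [:: a] * y [:: b; c])
   + eps k a b c * (x [:: a; b] * y [:: c]) + eps k a b c * (x [:: a; b; c] * y [::]))).
  apply: eq_bigr => a _; apply: eq_bigr => b _; apply: eq_bigr => c _.
  by rewrite tmul3; ring.
rewrite sum3_split; congr (_ + _ + _ + _).
- rewrite /eps3 mulr_sumr; apply: eq_bigr => a _; rewrite mulr_sumr.
  apply: eq_bigr => b _; rewrite mulr_sumr; apply: eq_bigr => c _; ring.
- apply: eq_bigr => a _; rewrite /psi2 mulr_sumr; apply: eq_bigr => b _.
  rewrite mulr_sumr; apply: eq_bigr => c _; rewrite eps_cyc; ring.
- under eq_bigr do rewrite exchange_big.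
  rewrite exchange_big; apply: eq_bigr => c _; rewrite /psi2 mulr_suml.
  apply: eq_bigr => a _; rewrite mulr_suml; apply: eq_bigr => b _; ring.
- rewrite /eps3 mulr_suml; apply: eq_bigr => a _; rewrite mulr_suml.
  apply: eq_bigr => b _; rewrite mulr_suml; apply: eq_bigr => c _; ring.
Qed.

Lemma eps3_tmulC x y : eps3 (tmul x y) = eps3 (tmul y x).
Proof.
rewrite !eps3_tmul.
have -> : \sum_(c < 7) psi2 y c * x [:: c] = \sum_(a < 7) x [:: a] * psi2 y a.
  by apply: eq_bigr => i _; rewrite mulrC.
have -> : \sum_(c < 7) psi2 x c * y [:: c] = \sum_(a < 7) y [:: a] * psi2 x a.
  by apply: eq_bigr => i _; rewrite mulrC.
ring.
Qed.

Lemma psi2_tword_other u i : size u != 2%N -> psi2 (tword k u) i = 0.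
Proof.
move=> su; rewrite /psi2 big1 // => m _; rewrite big1 // => n _.
by rewrite tword_size ?mulr0 // eq_sym.
Qed.

Lemma eps3_tword_other u : size u != 3%N -> eps3 (tword k u) = 0.
Proof.
move=> su; rewrite /eps3 big1 // => a _; rewrite big1 // => b _; rewrite big1 // => c _.
by rewrite tword_size ?mulr0 // eq_sym.
Qed.

Lemma span_of_psi2 x : homog 2 x -> (forall i, psi2 x i = 0) -> span x.
Proof.
move=> h P; apply: span_gen; exists [::], [::], x; split.
  by apply/Rperp_psi2.
by rewrite tword_nil_l tword_nil_r.
Qed.

Lemma inI_of_psi2 x : homog 2 x -> (forall i, psi2 x i = 0) -> inI x.
Proof.
move=> h P n; case: (eqVneq n 2%N) => [->|ne].
  by rewrite hcomp_homog //; apply: span_of_psi2.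
by rewrite (hcomp_other _ _ _ h ne); exact: span0.
Qed.

Lemma inI_of_eps3 x : homog 3 x -> eps3 x = 0 -> inI x.
Proof.
move=> h P n; case: (eqVneq n 3%N) => [->|ne].
  by rewrite hcomp_homog //; apply: H3span.
by rewrite (hcomp_other _ _ _ h ne); exact: span0.
Qed.


Lemma part1_ident : ident_ImO 2 (@psi2 k).
Proof.
split; first by move=> c x y i; exact: psi2_lin.
split.
  move=> x hx; split; first exact: inI_of_psi2.
  by move=> H i; apply: inI_psi2.
move=> v; exists (fun w => \sum_(j < 7) v j * tword k [:: ppf j; qqf j] w); split.
  by move=> w sw; rewrite big1 // => j _; rewrite tword_size ?mulr0.
move=> i; rewrite psi2_big.
under eq_bigr do rewrite psi2_tword eps_pq mulrC.
exact: sum_delta.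
Qed.

Lemma part1_prod (u v : tens k) i : homog 1 u -> homog 1 v ->
  psi2 (tmul u v) i = oIm (omul (imO (iota1 u)) (imO (iota1 v))) i.
Proof.
move=> hu hv; rewrite /psi2 /omul /imO /iota1 /= !mul0r !add0r.
apply: eq_bigr => m _; apply: eq_bigr => n _.
rewrite tmul2 (hu [::]) // (hu [:: m; n]) // (hv [::]) //; ring.
Qed.

Lemma part2_ident : ident_k 3 (@eps3 k).
Proof.
split; first by move=> c x y; exact: eps3_lin.
split.
  move=> x hx; split; first exact: inI_of_eps3.
  exact: inI_eps3.
move=> v; exists (fun w => v * tword k w0 w); split.
  by move=> w sw; rewrite tword_size ?mulr0.
transitivity (v * eps3 (tword k w0)); last by rewrite eps3_tword eps_w0 mulr1.
rewrite /eps3 mulr_sumr; apply: eq_bigr => a _; rewrite mulr_sumr.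
apply: eq_bigr => b _; rewrite mulr_sumr; apply: eq_bigr => c _; ring.
Qed.

Lemma part2_prod (u v w : tens k) : homog 1 u -> homog 1 v -> homog 1 w ->
  eps3 (tmul (tmul u v) w)
    = - oRe (omul (omul (imO (iota1 u)) (imO (iota1 v))) (imO (iota1 w))).
Proof.
move=> hu hv hw; rewrite /eps3 /omul /imO /iota1 /=.
rewrite !mul0r !mulr0 !add0r opprK.
under [RHS]eq_bigr do rewrite !mul0r !add0r.
under eq_bigr do rewrite exchange_big.
rewrite exchange_big; apply: eq_bigr => c _; rewrite mulr_suml.
apply: eq_bigr => a _; rewrite mulr_suml; apply: eq_bigr => b _.
rewrite tmul3 tmul2 (hw [::]) // (hw [:: a; b; c]) // (hw [:: b; c]) //.
rewrite (hu [::]) // (hu [:: a; b]) // (hv [::]) //; ring.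
Qed.


Lemma fin_dim : fin_dim_Ashriek k.
Proof.
exists 4%N => x H n; case: (leqP 4 n) => hn.
  exact: H4span hn (homog_hcomp _ _).
apply: (span_ext span0) => w; rewrite /hcomp; case: eqP => // E.
by rewrite H // E.
Qed.

Definition Phi x y := eps3 (tmul x y).

Lemma Phi_inIr x y : inI y -> Phi x y = 0.
Proof.
move=> H; rewrite /Phi eps3_tmul (inI_eps3 y H) (inI_nil y H) !mulr0 addr0.
rewrite big1 => [|a _]; last by rewrite inI_psi2 // mulr0.
rewrite big1 => [|c _]; last by rewrite inI_one // mulr0.
by rewrite !addr0.
Qed.

Lemma Phi_val x y : Phi x y = x [::] * eps3 y + \sum_(a < 7) x [:: a] * psi2 y a
  + \sum_(c < 7) psi2 x c * y [:: c] + eps3 x * y [::].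
Proof. exact: eps3_tmul. Qed.

Lemma nondeg x : (forall y, Phi x y = 0) -> inI x.
Proof.
move=> H.
have H0 : x [::] = 0.
  have := H (tword k w0); rewrite Phi_val eps3_tword eps_w0 mulr1.
  rewrite big1 => [|a _]; last by rewrite psi2_tword_other ?mulr0.
  rewrite big1 => [|c _]; last by rewrite tword_size ?mulr0.
  by rewrite tword_size // !mulr0 !addr0.
have H1 : forall a, x [:: a] = 0.
  move=> a; have := H (tword k [:: ppf a; qqf a]); rewrite Phi_val eps3_tword_other //.
  under eq_bigr do rewrite psi2_tword eps_pq.
  have -> : \sum_(c < 7) psi2 x c * tword k [:: ppf a; qqf a] [:: c] = 0.
    by rewrite big1 // => c _; rewrite tword_size ?mulr0.
  rewrite (tword_size _ [::]) // !mulr0 add0r !addr0.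
  rewrite (eq_bigr (fun i => (a == i)%:R * x [:: i])); last first.
    by move=> i _; rewrite mulrC.
  by rewrite sum_delta'.
have H2 : forall c, psi2 x c = 0.
  move=> c; have := H (tword k [:: c]); rewrite Phi_val eps3_tword_other //.
  rewrite big1 => [|a _]; last by rewrite psi2_tword_other ?mulr0.
  rewrite tword_size // !mulr0 add0r !addr0.
  rewrite (eq_bigr (fun i => (c == i)%:R * psi2 x i)); last first.
    by move=> i _; rewrite /tword eqseq_cons andbT eq_sym mulrC.
  by rewrite sum_delta' add0r.
have H3 : eps3 x = 0.
  have := H (tword k [::]); rewrite Phi_val eps3_tword_other //.
  rewrite big1 => [|a _]; last by rewrite psi2_tword_other ?mulr0.
  rewrite big1 => [|c _]; last by rewrite tword_size ?mulr0.
  by rewrite /tword eqxx mulr1 mulr0 !add0r.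
case=> [|[|[|[|n]]]].
- apply: (span_ext span0) => w; rewrite /hcomp; case: w => [|? ?] //=.
  all: try by rewrite H0.
- apply: (span_ext span0) => w; rewrite /hcomp; case: w => [|a [|? ?]] //=.
  all: try by rewrite H1.
- apply: span_of_psi2; first exact: homog_hcomp.
  by move=> i; rewrite -(H2 i); apply: psi2_ext => m n; rewrite /hcomp.
- apply: H3span; first exact: homog_hcomp.
  by rewrite -H3; apply: eps3_ext => a b c; rewrite /hcomp.
- apply: H4span; last exact: homog_hcomp.
  by lia.
Qed.


Lemma eps3_scale c x : eps3 (fun w => c * x w) = c * eps3 x.
Proof.
rewrite /eps3 mulr_sumr; apply: eq_bigr => a _; rewrite mulr_sumr.
apply: eq_bigr => b _; rewrite mulr_sumr; apply: eq_bigr => d _; ring.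
Qed.

Section Repr.
Variable f : tens k -> k.
Hypothesis hf : tfunctional f.

Lemma f0 : f (fun _ => 0) = 0.
Proof.
have := hf 1 (fun _ => 0) (fun _ => 0).
have -> : tadd (tscale 1 (fun _ : word => 0 : k)) (fun _ => 0) = (fun _ => 0).
  by apply: functional_extensionality => w; rewrite /tadd /tscale mulr0 addr0.
rewrite mul1r => /(congr1 (fun t => t - f (fun _ => 0))).
by rewrite subrr addrK.
Qed.

Lemma f_lin c x y : f (fun w => c * x w + y w) = c * f x + f y.
Proof. exact: hf. Qed.

Lemma f_add x y : f (fun w => x w + y w) = f x + f y.
Proof.
rewrite -(mul1r (f x)) -f_lin; congr f.
by apply: functional_extensionality => w; rewrite mul1r.
Qed.

Lemma f_sum (I : Type) (s : seq I) (c : I -> k) (g : I -> tens k) :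
  f (fun w => \sum_(i <- s) c i * g i w) = \sum_(i <- s) c i * f (g i).
Proof.
elim: s => [|i s IH].
  have -> : (fun w => \sum_(i <- [::]) c i * g i w) = (fun _ => 0).
    by apply: functional_extensionality => w; rewrite big_nil.
  by rewrite f0 big_nil.
have -> : (fun w => \sum_(j <- i :: s) c j * g j w) =
   (fun w => c i * g i w + \sum_(j <- s) c j * g j w).
  by apply: functional_extensionality => w; rewrite big_cons.
by rewrite f_lin IH big_cons.
Qed.

End Repr.

Lemma repr (f : tens k -> k) : tfunctional f -> (forall y, inI y -> f y = 0) ->
  exists x, forall y, f y = Phi x y.
Proof.
move=> hf hI.
pose x : tens k := fun w => match w with
  | [::] => f (tword k w0)
  | [:: a] => f (tword k [:: ppf a; qqf a])
  | [:: a; b] => \sum_(c < 7) f (tword k [:: c]) * tword k [:: ppf c; qqf c] [:: a; b]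
  | [:: a; b; c] => f (tword k [::]) * tword k w0 [:: a; b; c]
  | _ => 0 end.
exists x => y.
pose z : tens k := fun w => y [::] * tword k [::] w + ((\sum_(a < 7) y [:: a] * tword k [:: a] w)
   + ((\sum_(c < 7) psi2 y c * tword k [:: ppf c; qqf c] w) + eps3 y * tword k w0 w)).
have Dz0 : z [::] = y [::].
  rewrite /z /tword eqxx mulr1 big1 => [|a _]; last by rewrite mulr0.
  by rewrite big1 => [|c _]; rewrite ?mulr0 // !addr0.
have Dz1 : forall a, z [:: a] = y [:: a].
  move=> a; rewrite /z (tword_size [::] [:: a]) // (tword_size w0 [:: a]) // !mulr0 add0r addr0.
  have -> : \sum_(c < 7) psi2 y c * tword k [:: ppf c; qqf c] [:: a] = 0.
    by rewrite big1 // => c _; rewrite tword_size ?mulr0.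
  rewrite addr0 (eq_bigr (fun i => (a == i)%:R * y [:: i])) ?sum_delta' //.
  by move=> i _; rewrite /tword eqseq_cons andbT mulrC.
have Dz2 : forall i, psi2 z i = psi2 y i.
  move=> i; rewrite (psi2_ext _ (fun w => \sum_(c < 7) psi2 y c * tword k [:: ppf c; qqf c] w)).
    rewrite psi2_big; under eq_bigr do rewrite psi2_tword eps_pq mulrC.
    exact: sum_delta.
  move=> m n; rewrite /z (tword_size [::] [:: m; n]) // (tword_size w0 [:: m; n]) // !mulr0 add0r addr0.
  by rewrite big1 ?add0r // => a _; rewrite tword_size ?mulr0.
have Dz3 : eps3 z = eps3 y.
  rewrite (eps3_ext _ (fun w => eps3 y * tword k w0 w)).
    by rewrite eps3_scale eps3_tword eps_w0 mulr1.
  move=> a b c; rewrite /z (tword_size [::] [:: a; b; c]) // mulr0 add0r.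
  rewrite big1 ?add0r => [|a' _]; last by rewrite tword_size ?mulr0.
  by rewrite big1 ?add0r => [|c' _]; last by rewrite tword_size ?mulr0.
have HI : inI (fun w => -1 * z w + y w).
  case=> [|[|[|[|n]]]].
  - apply: (span_ext span0) => w; rewrite /hcomp; case: w => [|? ?] //=.
    by rewrite Dz0 mulN1r addNr.
  - apply: (span_ext span0) => w; rewrite /hcomp; case: w => [|a [|? ?]] //=.
    by rewrite Dz1 mulN1r addNr.
  - apply: span_of_psi2; first exact: homog_hcomp.
    move=> i; rewrite (psi2_ext _ (fun w => -1 * z w + y w)); last by move=> m n; rewrite /hcomp.
    by rewrite psi2_lin Dz2 mulN1r addNr.
  - apply: H3span; first exact: homog_hcomp.
    rewrite (eps3_ext _ (fun w => -1 * z w + y w)); last by move=> a b c; rewrite /hcomp.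
    by rewrite eps3_lin Dz3 mulN1r addNr.
  - apply: H4span; last exact: homog_hcomp.
    by lia.
have Hz : f y = f z.
  have := hI _ HI.
  have -> : f (fun w => -1 * z w + y w) = -1 * f z + f y by exact: hf.
  move=> E; apply/eqP; rewrite -subr_eq0; apply/eqP; rewrite -E mulN1r addrC.
  by [].
have Px : forall c, psi2 x c = f (tword k [:: c]).
  move=> c; rewrite (psi2_ext _ (fun w => \sum_(c' < 7) f (tword k [:: c']) * tword k [:: ppf c'; qqf c'] w)) //.
  rewrite psi2_big; under eq_bigr do rewrite psi2_tword eps_pq mulrC.
  exact: sum_delta.
have Ex : eps3 x = f (tword k [::]).
  rewrite (eps3_ext _ (fun w => f (tword k [::]) * tword k w0 w)) //.
  by rewrite eps3_scale eps3_tword eps_w0 mulr1.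
pose S1 : tens k := fun w => \sum_(a < 7) y [:: a] * tword k [:: a] w.
pose S2 : tens k := fun w => \sum_(c < 7) psi2 y c * tword k [:: ppf c; qqf c] w.
pose S3 : tens k := fun w => eps3 y * tword k w0 w.
have E1 : f z = y [::] * f (tword k [::]) + f (fun w => S1 w + (S2 w + S3 w)).
  exact: (hf (y [::]) (tword k [::]) (fun w => S1 w + (S2 w + S3 w))).
have E2 : f (fun w => S1 w + (S2 w + S3 w)) = f S1 + (f S2 + f S3).
  by rewrite (f_add f hf S1 (fun w => S2 w + S3 w)) (f_add f hf S2 S3).
have E3 : f S1 = \sum_(a < 7) y [:: a] * f (tword k [:: a]).
  exact: (f_sum f hf _ (index_enum 'I_7) (fun a => y [:: a]) (fun a => tword k [:: a])).
have E4 : f S2 = \sum_(c < 7) psi2 y c * f (tword k [:: ppf c; qqf c]).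
  exact: (f_sum f hf _ (index_enum 'I_7) (fun c => psi2 y c) (fun c => tword k [:: ppf c; qqf c])).
have E5 : f S3 = eps3 y * f (tword k w0).
  have := hf (eps3 y) (tword k w0) (fun _ => 0); rewrite f0 // addr0 => <-.
  congr f; apply: functional_extensionality => w; by rewrite /S3 /tadd /tscale addr0.
rewrite Hz Phi_val E1 E2 E3 E4 E5 Ex.
have -> : \sum_(c < 7) psi2 x c * y [:: c] = \sum_(a < 7) y [:: a] * f (tword k [:: a]).
  by apply: eq_bigr => i _; rewrite Px mulrC.
have -> : \sum_(a < 7) x [:: a] * psi2 y a = \sum_(c < 7) psi2 y c * f (tword k [:: ppf c; qqf c]).
  by apply: eq_bigr => i _; rewrite mulrC.
rewrite /x; ring.
Qed.


Lemma Phi_bimod : bimod_iso_dual Phi.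
Proof.
split.
  move=> x c y y'; rewrite /Phi.
  have -> : tmul x (tadd (tscale c y) y') = (fun w => c * tmul x y w + tmul x y' w).
    by apply: functional_extensionality => w; rewrite /tadd /tscale tmul_linr.
  exact: eps3_lin.
split.
  move=> y c x x'; rewrite /Phi.
  have -> : tmul (tadd (tscale c x) x') y = (fun w => c * tmul x y w + tmul x' y w).
    by apply: functional_extensionality => w; rewrite /tadd /tscale tmul_linl.
  exact: eps3_lin.
split; first by move=> x y; apply: Phi_inIr.
split; first by move=> x y H; rewrite /Phi eps3_tmulC; apply: Phi_inIr.
split.
  move=> a x b y; rewrite /Phi !tmul_assoc eps3_tmulC !tmul_assoc.
  by [].
split; first exact: nondeg.
exact: repr.
Qed.

End Main.

Theorem proposition5p3 (k : fieldType) (hk : (2 \notin [pchar k])%N) :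
  (exists psi2 : tens k -> 'I_7 -> k,
     ident_ImO 2 psi2 /\
     forall u v : tens k, homog 1 u -> homog 1 v ->
       forall i, psi2 (tmul u v) i = oIm (omul (imO (iota1 u)) (imO (iota1 v))) i) /\
  (exists psi3 : tens k -> k,
     ident_k 3 psi3 /\
     forall u v w : tens k, homog 1 u -> homog 1 v -> homog 1 w ->
       psi3 (tmul (tmul u v) w)
         = - oRe (omul (omul (imO (iota1 u)) (imO (iota1 v))) (imO (iota1 w)))) /\
  sym_frobenius_Ashriek k.
Proof.
split.
  exists (@psi2 k); split; first exact: part1_ident.
  by move=> u v hu hv i; apply: part1_prod.
split.
  exists (@eps3 k); split; first exact: part2_ident.
  by move=> u v w hu hv hw; apply: part2_prod.
split; first exact: fin_dim.
by exists Phi; apply: Phi_bimod.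
Qed.
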